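(* If $\gamma>-1/2$ and $\tau\in\mathbb{R}$, then the entire function $z\mapsto {}_1F_1(\gamma+i\tau;2\gamma+1;iz)e^{-iz/2}$ belongs to the Hermite–Biehler class.
   Context: The Hermite–Biehler class is the set of entire functions $E$ having no zeros in the upper half-plane $\{\operatorname{Im} z>0\}$ and satisfying $|E(z)|\ge|E(\bar z)|$ for $\operatorname{Im} z>0$. ${}_1F_1(\alpha;\beta;z)=\sum_{k\ge0}\frac{(\alpha)_k}{(\beta)_k}\frac{z^k}{k!}$ is the confluent hypergeometric function. *)

(* Defs.v *)
From Stdlib Require Import Reals.
From Coquelicot Require Import Coquelicot.
Open Scope C_scope.

Fixpoint poch (a : C) (k : nat) : C :=
  match k with
  | O => 1
  | S k' => poch a k' * (a + RtoC (INR k'))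
  end.

Definition hyp1F1_term (a b z : C) (k : nat) : C :=
  poch a k / poch b k * (z ^ k) / RtoC (INR (Factorial.fact k)).

Definition hyp1F1 (a b z : C) : C :=
  lim (T := C_CompleteNormedModule) (filtermap (sum_n (hyp1F1_term a b z)) eventually).

Definition cexp (w : C) : C :=
  (exp (Re w) * cos (Im w), exp (Re w) * sin (Im w))%R.

Definition entire (f : C -> C) : Prop :=
  forall z : C, @ex_derive C_AbsRing C_NormedModule f z.

Definition hermite_biehler (E : C -> C) : Prop :=
  entire E /\
  (forall z : C, (0 < Im z)%R -> E z <> 0) /\
  (forall z : C, (0 < Im z)%R -> (Cmod (E (Cconj z)) <= Cmod (E z))%R).

(* Main.v *)
Require Import Defs.
From Stdlib Require Import Reals Lra Lia Psatz FunctionalExtensionality.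
From Coquelicot Require Import Coquelicot.
Local Open Scope R_scope.
Notation fact := Factorial.fact.

Lemma sum_n_Re (t : nat -> C) n : Re (sum_n t n) = sum_n (fun k => Re (t k)) n.
Proof.
  induction n.
  - rewrite !sum_O. reflexivity.
  - rewrite !sum_Sn. simpl. rewrite <- IHn. reflexivity.
Qed.
Lemma sum_n_Im (t : nat -> C) n : Im (sum_n t n) = sum_n (fun k => Im (t k)) n.
Proof.
  induction n.
  - rewrite !sum_O. reflexivity.
  - rewrite !sum_Sn. simpl. rewrite <- IHn. reflexivity.
Qed.

Lemma R_eq_eps (x y : R) : (forall eps : posreal, Rabs (x - y) < eps) -> x = y.
Proof.
  intros H. destruct (Req_dec x y) as [|n]; auto.
  exfalso. assert (0 < Rabs (x - y)) by (apply Rabs_pos_lt; lra).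
  specialize (H (mkposreal _ H0)). simpl in H. lra.
Qed.

Lemma lim_C_series (t : nat -> C) (l : C) :
  is_series (fun n => Re (t n)) (Re l) -> is_series (fun n => Im (t n)) (Im l) ->
  lim (T := C_CompleteNormedModule) (filtermap (sum_n t) eventually) = l.
Proof.
  intros H1 H2.
  set (F := filtermap (sum_n t) eventually).
  assert (FP : ProperFilter F) by (apply filtermap_proper_filter; apply eventually_filter).
  assert (Fl : forall eps : posreal, F (ball (M := C_UniformSpace) l eps)).
  { intros eps. unfold F, filtermap.
    pose proof (H1 _ (locally_ball (Re l) eps)) as E1.
    pose proof (H2 _ (locally_ball (Im l) eps)) as E2.
    destruct E1 as [N1 HN1]. destruct E2 as [N2 HN2].
    exists (max N1 N2). intros n Hn.
    split.
    - change (ball (Re l) eps (Re (sum_n t n))). rewrite sum_n_Re. apply HN1. lia.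
    - change (ball (Im l) eps (Im (sum_n t n))). rewrite sum_n_Im. apply HN2. lia. }
  assert (Fc : cauchy F).
  { intros eps. exists l. apply Fl. }
  pose proof (@complete_cauchy C_CompleteNormedModule F FP Fc) as Hlim.
  set (L := @lim C_CompleteNormedModule F) in *.
  assert (key : forall eps : posreal, Rabs (Re L - Re l) < 2 * eps /\ Rabs (Im L - Im l) < 2 * eps).
  { intros eps. assert (F (fun x => ball (M := C_UniformSpace) l eps x /\ ball (M := C_UniformSpace) L eps x)).
    { apply filter_and; auto. }
    destruct (filter_ex _ H) as [x [[a1 a2] [b1 b2]]].
    change (Rabs (fst x - fst l) < eps) in a1. change (Rabs (snd x - snd l) < eps) in a2.
    change (Rabs (fst x - fst L) < eps) in b1. change (Rabs (snd x - snd L) < eps) in b2.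
    unfold Re, Im. split.
    - apply Rabs_def1; apply Rabs_def2 in a1; apply Rabs_def2 in b1; lra.
    - apply Rabs_def1; apply Rabs_def2 in a2; apply Rabs_def2 in b2; lra. }
  destruct L as [L1 L2]. destruct l as [l1 l2]. simpl in key.
  f_equal; apply R_eq_eps; intros eps;
  assert (he : 0 < eps / 2) by (destruct eps; simpl; lra);
  destruct (key (mkposreal _ he)) as [k1 k2]; simpl in k1, k2; lra.
Qed.

Fixpoint csum (f : nat -> C) (n : nat) : C :=
  match n with O => f O | S m => (csum f m + f (S m))%C end.

Lemma Re_csum f n : Re (csum f n) = sum_f_R0 (fun k => Re (f k)) n.
Proof. induction n; simpl; auto. rewrite <- IHn. reflexivity. Qed.
Lemma Im_csum f n : Im (csum f n) = sum_f_R0 (fun k => Im (f k)) n.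
Proof. induction n; simpl; auto. rewrite <- IHn. reflexivity. Qed.
Lemma Cmod_csum f n : Cmod (csum f n) <= sum_f_R0 (fun k => Cmod (f k)) n.
Proof. induction n; simpl. lra. eapply Rle_trans. apply Cmod_triangle. lra. Qed.
Lemma csum_ext f g n : (forall k, (k <= n)%nat -> f k = g k) -> csum f n = csum g n.
Proof. induction n; intros H; simpl. apply H; lia. rewrite IHn by (intros; apply H; lia). rewrite H by lia. reflexivity. Qed.
Lemma csum_plus f g n : csum (fun k => f k + g k)%C n = (csum f n + csum g n)%C.
Proof. induction n; simpl; auto. rewrite IHn. ring. Qed.
Lemma csum_scal a f n : csum (fun k => a * f k)%C n = (a * csum f n)%C.
Proof. induction n; simpl; auto. rewrite IHn. ring. Qed.
Lemma csum_first f n : csum f (S n) = (f O + csum (fun k => f (S k)) n)%C.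
Proof. induction n. reflexivity.
  replace (csum f (S (S n))) with (csum f (S n) + f (S (S n)))%C by reflexivity.
  rewrite IHn. simpl. ring. Qed.

Definition fbB (c : nat -> C) A B := 0 <= A /\ 1 <= B /\ forall n, Cmod (c n) <= A * B ^ n / INR (fact n).
Definition fb (c : nat -> C) := exists A B, fbB c A B.
Definition HSt (t : nat -> C) (l : C) :=
  is_series (fun n => Re (t n)) (Re l) /\ is_series (fun n => Im (t n)) (Im l).
Definition HS (c : nat -> C) (w l : C) := HSt (fun n => c n * w ^ n)%C l.
Definition PS (c : nat -> C) (w : C) : C :=
  (Series (fun n => Re (c n * w ^ n)%C), Series (fun n => Im (c n * w ^ n)%C)).

Lemma exp_ser x : is_series (fun n => x ^ n / INR (fact n)) (exp x).
Proof.
  pose proof (is_exp_Reals x) as H. apply is_pseries_R in H.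
  eapply is_series_ext; [|exact H]. intros n. simpl. unfold Rdiv. ring.
Qed.

Lemma maj_ser A x : is_series (fun n => A * x ^ n / INR (fact n)) (A * exp x).
Proof.
  pose proof (is_series_scal A _ _ (exp_ser x)) as H.
  eapply is_series_ext; [|exact H]. intros n. simpl. change (scal A (x ^ n / INR (fact n))) with (A * (x ^ n / INR (fact n))). unfold Rdiv. ring.
Qed.

Lemma ser_abs_le (u v : nat -> R) V :
  (forall n, Rabs (u n) <= v n) -> is_series v V -> ex_series u /\ Rabs (Series u) <= V.
Proof.
  intros H Hv.
  assert (E1 : ex_series (fun n => Rabs (u n))).
  { apply (ex_series_le (K := R_AbsRing) (V := R_CompleteNormedModule)) with v.
    intros n. change (Rabs (Rabs (u n)) <= v n). rewrite Rabs_Rabsolu. auto. exists V; auto. }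
  split. apply ex_series_Rabs; auto.
  eapply Rle_trans. apply Series_Rabs; auto.
  rewrite <- (is_series_unique _ _ Hv). apply Series_le; [|exists V; auto].
  intros n; split; [apply Rabs_pos|auto].
Qed.

Lemma Cmod_le_ReIm x : Cmod x <= Rabs (Re x) + Rabs (Im x).
Proof.
  destruct x as [p q]. unfold Cmod, Re, Im; cbn [fst snd].
  rewrite <- (sqrt_pow2 (Rabs p + Rabs q)) by (pose proof (Rabs_pos p); pose proof (Rabs_pos q); lra).
  apply sqrt_le_1_alt.
  rewrite <- (pow2_abs p), <- (pow2_abs q).
  pose proof (Rabs_pos p); pose proof (Rabs_pos q). nra.
Qed.

Lemma ser_lin2 (u v : nat -> R) U V a b :
  is_series u U -> is_series v V -> is_series (fun n => a * u n + b * v n) (a * U + b * V).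
Proof.
  intros Hu Hv.
  pose proof (is_series_plus _ _ _ _ (is_series_scal a _ _ Hu) (is_series_scal b _ _ Hv)) as H.
  exact H.
Qed.

Lemma ser_ext (u v : nat -> R) U V : (forall n, u n = v n) -> U = V -> is_series u U -> is_series v V.
Proof. intros H1 H2 H. subst. eapply is_series_ext; eauto. Qed.

Lemma ser_zero : is_series (fun _ => 0) 0.
Proof.
  pose proof (maj_ser 0 0) as H. revert H. apply ser_ext. intros n. unfold Rdiv; now rewrite !Rmult_0_l. now rewrite Rmult_0_l.
Qed.

Lemma HSt_ext t s l l' : (forall n, t n = s n) -> l = l' -> HSt t l -> HSt s l'.
Proof. intros H1 H2 [A B]; subst; split; [revert A|revert B]; apply ser_ext; auto; intros n; rewrite H1; reflexivity. Qed.

Lemma HSt_plus t s l l' : HSt t l -> HSt s l' -> HSt (fun n => t n + s n)%C (l + l')%C.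
Proof.
  intros [A1 B1] [A2 B2]. split.
  - pose proof (ser_lin2 _ _ _ _ 1 1 A1 A2) as HH; revert HH; apply ser_ext; [intros n; unfold Re, Im; simpl; ring | unfold Re, Im; simpl; ring].
  - pose proof (ser_lin2 _ _ _ _ 1 1 B1 B2) as HH; revert HH; apply ser_ext; [intros n; unfold Re, Im; simpl; ring | unfold Re, Im; simpl; ring].
Qed.

Lemma HSt_scal k t l : HSt t l -> HSt (fun n => k * t n)%C (k * l)%C.
Proof.
  intros [A1 B1]. split.
  - pose proof (ser_lin2 _ _ _ _ (Re k) (- Im k) A1 B1) as HH; revert HH; apply ser_ext; [intros n; unfold Re, Im; simpl; ring | unfold Re, Im; simpl; ring].
  - pose proof (ser_lin2 _ _ _ _ (Im k) (Re k) A1 B1) as HH; revert HH; apply ser_ext; [intros n; unfold Re, Im; simpl; ring | unfold Re, Im; simpl; ring].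
Qed.

Lemma HSt_conj t l : HSt t l -> HSt (fun n => Cconj (t n)) (Cconj l).
Proof.
  intros [A1 B1]. split.
  - revert A1; apply ser_ext; [intros n; unfold Re, Im; simpl; ring | unfold Re, Im; simpl; ring].
  - pose proof (ser_lin2 _ _ _ _ (-1) 0 B1 B1) as HH; revert HH; apply ser_ext; [intros n; unfold Re, Im; simpl; ring | unfold Re, Im; simpl; ring].
Qed.

Lemma HSt_zero : HSt (fun _ => RtoC 0) (RtoC 0).
Proof. split; apply ser_zero. Qed.

Lemma HSt_decr t l : t O = RtoC 0 -> HSt (fun k => t (S k)) l -> HSt t l.
Proof.
  intros H0 [A1 B1]. split.
  - apply is_series_decr_1. eapply ser_ext; [| | exact A1]; intros; auto.
    rewrite H0. change (Re l = Re l + - 0). ring.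
  - apply is_series_decr_1. eapply ser_ext; [| | exact B1]; intros; auto.
    rewrite H0. change (Im l = Im l + - 0). ring.
Qed.

Lemma HSt_bound t l (v : nat -> R) V :
  (forall n, Cmod (t n) <= v n) -> is_series v V -> HSt t l -> Cmod l <= 2 * V.
Proof.
  intros Hb Hv [A1 B1].
  assert (h1 : forall n, Rabs (Re (t n)) <= v n) by (intros; eapply Rle_trans; [apply re_le_Cmod|auto]).
  assert (h2 : forall n, Rabs (Im (t n)) <= v n).
  { intros; eapply Rle_trans; [|apply Hb]. destruct (t n) as [p q].
    pose proof (re_le_Cmod (q, p)). unfold Cmod in *. cbn [fst snd Re Im] in *.
    replace (p ^ 2 + q ^ 2) with (q ^ 2 + p ^ 2) by ring. auto. }
  destruct (ser_abs_le _ _ _ h1 Hv) as [_ E1].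
  destruct (ser_abs_le _ _ _ h2 Hv) as [_ E2].
  rewrite (is_series_unique _ _ A1) in E1. rewrite (is_series_unique _ _ B1) in E2.
  eapply Rle_trans. apply Cmod_le_ReIm. lra.
Qed.

Lemma fb_term c A B w n : fbB c A B -> Cmod (c n * w ^ n)%C <= A * (B * Cmod w) ^ n / INR (fact n).
Proof.
  intros [HA [HB H]]. rewrite Cmod_mult, Cmod_pow, Rpow_mult_distr.
  specialize (H n). pose proof (pow_le (Cmod w) n (Cmod_ge_0 w)).
  apply Rmult_le_compat_r with (r := Cmod w ^ n) in H; auto.
  eapply Rle_trans; [exact H|]. unfold Rdiv. right; ring.
Qed.

Lemma HS_PS c A B w : fbB c A B -> HS c w (PS c w).
Proof.
  intros Hc. pose proof (fun n => fb_term c A B w n Hc) as Hb.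
  pose proof (maj_ser A (B * Cmod w)) as Hm.
  assert (h1 : forall n, Rabs (Re (c n * w ^ n)%C) <= A * (B * Cmod w) ^ n / INR (fact n))
    by (intros; eapply Rle_trans; [apply re_le_Cmod|auto]).
  assert (h2 : forall n, Rabs (Im (c n * w ^ n)%C) <= A * (B * Cmod w) ^ n / INR (fact n)).
  { intros; eapply Rle_trans; [|apply Hb]. destruct (c n * w ^ n)%C as [p q].
    pose proof (re_le_Cmod (q, p)). unfold Cmod in *. cbn [fst snd Re Im] in *.
    replace (p ^ 2 + q ^ 2) with (q ^ 2 + p ^ 2) by ring. auto. }
  destruct (ser_abs_le _ _ _ h1 Hm) as [E1 _].
  destruct (ser_abs_le _ _ _ h2 Hm) as [E2 _].
  split; apply Series_correct; auto.
Qed.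

Lemma HS_unique c w l : HS c w l -> PS c w = l.
Proof.
  intros [A1 B1]. destruct l as [p q]. unfold PS. f_equal.
  apply is_series_unique; auto. apply is_series_unique; auto.
Qed.

Lemma PS_bound c A B w : fbB c A B -> Cmod (PS c w) <= 2 * (A * exp (B * Cmod w)).
Proof.
  intros Hc. eapply HSt_bound; [| apply maj_ser | apply (HS_PS _ _ _ _ Hc)].
  intros n. apply fb_term; auto.
Qed.

Definition sh (c : nat -> C) (n : nat) : C := match n with O => RtoC 0 | S m => c m end.
Definition tl (c : nat -> C) (n : nat) : C := c (S n).
Definition dc (c : nat -> C) (n : nat) : C := (RtoC (INR (S n)) * c (S n))%C.
Definition conv (a b : nat -> C) (n : nat) : C := csum (fun k => a k * b (n - k)%nat)%C n.

Lemma HS_sh c w l : HS c w l -> HS (sh c) w (w * l)%C.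
Proof.
  intros H. apply HSt_decr. simpl. ring.
  apply (HSt_scal w) in H. revert H. apply HSt_ext; auto. intros n. simpl. ring.
Qed.

Lemma HSt_decr' t l : HSt (fun k => t (S k)) (l - t O)%C -> HSt t l.
Proof.
  intros [A1 B1]. split.
  - apply is_series_decr_1. revert A1. apply ser_ext; auto.
  - apply is_series_decr_1. revert B1; apply ser_ext; auto.
Qed.

Lemma HS_tl c w l : HS (tl c) w l -> HS c w (c O + w * l)%C.
Proof.
  intros H. apply HSt_decr'. apply (HSt_scal w) in H. revert H. apply HSt_ext.
  intros n. unfold tl. simpl. ring. simpl. ring.
Qed.

Lemma csum_mulr f x n : (csum f n * x)%C = csum (fun k => f k * x)%C n.
Proof. induction n; simpl; auto. rewrite <- IHn. ring. Qed.

Lemma Im_le_Cmod z : Rabs (Im z) <= Cmod z.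
Proof.
  destruct z as [p q]. pose proof (re_le_Cmod (q, p)). unfold Cmod in *. cbn [fst snd Re Im] in *.
  replace (p ^ 2 + q ^ 2) with (q ^ 2 + p ^ 2) by ring. auto.
Qed.

Lemma fb_abs c A B w : fbB c A B ->
  ex_series (fun n => Rabs (Re (c n * w ^ n)%C)) /\ ex_series (fun n => Rabs (Im (c n * w ^ n)%C)).
Proof.
  intros Hc. pose proof (maj_ser A (B * Cmod w)) as Hm.
  assert (Hb := fun n => fb_term c A B w n Hc).
  split; apply (ex_series_le (K := R_AbsRing) (V := R_CompleteNormedModule)) with (fun n => A * (B * Cmod w) ^ n / INR (fact n));
   try (exists (A * exp (B * Cmod w)); exact Hm); intros n.
  - change (Rabs (Rabs (Re (c n * w ^ n)%C)) <= A * (B * Cmod w) ^ n / INR (fact n)).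
    rewrite Rabs_Rabsolu; eapply Rle_trans; [apply re_le_Cmod|apply Hb].
  - change (Rabs (Rabs (Im (c n * w ^ n)%C)) <= A * (B * Cmod w) ^ n / INR (fact n)).
    rewrite Rabs_Rabsolu; eapply Rle_trans; [apply Im_le_Cmod|apply Hb].
Qed.

Ltac Rr := match goal with |- ?a = ?b => change (@eq R a b) end; ring.

Lemma sum_lin2 (f g : nat -> R) a b n :
  a * sum_f_R0 f n + b * sum_f_R0 g n = sum_f_R0 (fun k => a * f k + b * g k) n.
Proof. induction n; simpl. ring. rewrite <- IHn. ring. Qed.

Lemma HS_mult c d A B A' B' w : fbB c A B -> fbB d A' B' -> HS (conv c d) w (PS c w * PS d w)%C.
Proof.
  intros Hc Hd.
  set (al := fun k => (c k * w ^ k)%C). set (be := fun k => (d k * w ^ k)%C).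
  assert (E : forall n, (conv c d n * w ^ n)%C = csum (fun k => al k * be (n - k)%nat)%C n).
  { intros n. unfold conv. rewrite csum_mulr. apply csum_ext. intros k Hk. unfold al, be.
    replace (w ^ n)%C with (w ^ k * w ^ (n - k))%C. ring.
    rewrite <- Cpow_add_r. f_equal. lia. }
  destruct (HS_PS _ _ _ w Hc) as [Pc1 Pc2]. destruct (HS_PS _ _ _ w Hd) as [Pd1 Pd2].
  destruct (fb_abs _ _ _ w Hc) as [Ac1 Ac2]. destruct (fb_abs _ _ _ w Hd) as [Ad1 Ad2].
  pose proof (is_series_mult _ _ _ _ Pc1 Pd1 Ac1 Ad1) as M11.
  pose proof (is_series_mult _ _ _ _ Pc2 Pd2 Ac2 Ad2) as M22.
  pose proof (is_series_mult _ _ _ _ Pc1 Pd2 Ac1 Ad2) as M12.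
  pose proof (is_series_mult _ _ _ _ Pc2 Pd1 Ac2 Ad1) as M21.
  split.
  - pose proof (ser_lin2 _ _ _ _ 1 (-1) M11 M22) as HH. revert HH. apply ser_ext.
    + intros n. rewrite E, Re_csum, sum_lin2.
      apply sum_eq. intros i _. cbv beta. fold (al i). fold (be (n - i)%nat). rewrite re_mult. unfold al, be. ring.
    + rewrite re_mult; Rr.
  - pose proof (ser_lin2 _ _ _ _ 1 1 M12 M21) as HH. revert HH. apply ser_ext.
    + intros n. rewrite E, Im_csum, sum_lin2.
      apply sum_eq. intros i _. cbv beta. fold (al i). fold (be (n - i)%nat). rewrite im_mult. unfold al, be. ring.
    + rewrite im_mult; Rr.
Qed.

Lemma INR_fact_pos n : 0 < INR (fact n).
Proof. apply INR_fact_lt_0. Qed.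

Lemma sum_scal_l (f : nat -> R) x n : sum_f_R0 (fun i => x * f i) n = x * sum_f_R0 f n.
Proof. induction n; simpl. ring. rewrite IHn. ring. Qed.

Lemma binom_fact B B' n :
  sum_f_R0 (fun k => B ^ k / INR (fact k) * (B' ^ (n - k) / INR (fact (n - k)))) n = (B + B') ^ n / INR (fact n).
Proof.
  rewrite binomial. unfold Rdiv. rewrite (Rmult_comm (sum_f_R0 _ n)), scal_sum.
  apply sum_eq. intros i Hi. unfold Binomial.C.
  pose proof (INR_fact_neq_0 i). pose proof (INR_fact_neq_0 n). pose proof (INR_fact_neq_0 (n - i)).
  field. auto.
Qed.

Lemma fb_conv c d A B A' B' : fbB c A B -> fbB d A' B' -> fbB (conv c d) (A * A') (B + B').
Proof.
  intros [HA [HB Hc]] [HA' [HB' Hd]]. split; [nra | split; [lra|]]. intros n.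
  unfold conv. eapply Rle_trans. apply Cmod_csum.
  eapply Rle_trans. apply sum_Rle with (Bn := fun k => A * A' * (B ^ k / INR (fact k) * (B' ^ (n - k) / INR (fact (n - k))))).
  { intros k _. rewrite Cmod_mult. specialize (Hc k). specialize (Hd (n - k)%nat).
    pose proof (Cmod_ge_0 (c k)). pose proof (Cmod_ge_0 (d (n - k)%nat)).
    eapply Rle_trans. apply Rmult_le_compat; eauto.
    right. unfold Rdiv. ring. }
  rewrite sum_scal_l. rewrite binom_fact. right. unfold Rdiv. ring.
Qed.

Lemma fb_dc c A B : fbB c A B -> fbB (dc c) (A * B) B.
Proof.
  intros [HA [HB Hc]]. split; [nra | split; [lra|]]. intros n. unfold dc.
  rewrite Cmod_mult, Cmod_R, Rabs_right by (apply Rle_ge, pos_INR).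
  specialize (Hc (S n)). rewrite fact_simpl, mult_INR in Hc.
  pose proof (INR_fact_pos n). pose proof (pos_INR (S n)).
  apply Rmult_le_compat_l with (r := INR (S n)) in Hc; auto.
  eapply Rle_trans; [exact Hc|]. right. simpl pow. rewrite S_INR in *. pose proof (pos_INR n). field. split; apply Rgt_not_eq; lra.
Qed.

Lemma fb_tl c A B : fbB c A B -> fbB (tl c) (A * B) B.
Proof.
  intros [HA [HB Hc]]. split; [nra | split; [lra|]]. intros n. unfold tl.
  specialize (Hc (S n)). rewrite fact_simpl, mult_INR, S_INR in Hc.
  pose proof (INR_fact_pos n). pose proof (pos_INR n).
  eapply Rle_trans; [exact Hc|]. simpl pow. unfold Rdiv. rewrite Rinv_mult.
  assert (0 <= A * B * B ^ n * / INR (fact n)).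
  { pose proof (pow_le B n). apply Rmult_le_pos. apply Rmult_le_pos. nra. lra. left; apply Rinv_0_lt_compat; auto. }
  assert (0 < / (INR n + 1) <= 1).
  { split. apply Rinv_0_lt_compat; lra. rewrite <- Rinv_1. apply Rinv_le_contravar; lra. }
  replace (A * (B * B ^ n) * (/ (INR n + 1) * / INR (fact n))) with ((A * B * B ^ n * / INR (fact n)) * / (INR n + 1)) by ring.
  nra.
Qed.

Lemma fb_plus c d A B A' B' : fbB c A B -> fbB d A' B' -> fbB (fun n => c n + d n)%C (A + A') (Rmax B B').
Proof.
  intros [HA [HB Hc]] [HA' [HB' Hd]]. split; [lra | split; [eapply Rle_trans; [exact HB| apply Rmax_l]|]]. intros n.
  eapply Rle_trans. apply Cmod_triangle.
  pose proof (pow_incr B (Rmax B B') n (conj (ltac:(lra) : 0 <= B) (Rmax_l B B'))).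
  pose proof (pow_incr B' (Rmax B B') n (conj (ltac:(lra) : 0 <= B') (Rmax_r B B'))).
  specialize (Hc n). specialize (Hd n). pose proof (INR_fact_pos n).
  unfold Rdiv in *. assert (0 < / INR (fact n)) by (apply Rinv_0_lt_compat; auto).
  assert (A * B ^ n * / INR (fact n) <= A * Rmax B B' ^ n * / INR (fact n)).
  { apply Rmult_le_compat_r; [lra|apply Rmult_le_compat_l; lra]. }
  assert (A' * B' ^ n * / INR (fact n) <= A' * Rmax B B' ^ n * / INR (fact n)).
  { apply Rmult_le_compat_r; [lra|apply Rmult_le_compat_l; lra]. }
  lra.
Qed.

Lemma fb_scal k c A B : fbB c A B -> fbB (fun n => k * c n)%C (Cmod k * A) B.
Proof.
  intros [HA [HB Hc]]. pose proof (Cmod_ge_0 k). split; [nra | split; [lra|]]. intros n.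
  rewrite Cmod_mult. eapply Rle_trans. apply Rmult_le_compat_l; eauto. right. unfold Rdiv; ring.
Qed.

Lemma fb_conj c A B : fbB c A B -> fbB (fun n => Cconj (c n)) A B.
Proof. intros [HA [HB Hc]]. split; auto. split; auto. intros n. rewrite Cmod_conj. auto. Qed.

Lemma fb_ext c d A B : (forall n, c n = d n) -> fbB c A B -> fbB d A B.
Proof. intros E [HA [HB Hc]]. split; auto. split; auto. intros n. rewrite <- E. auto. Qed.

Lemma INR_le_pow2 n : INR n <= 2 ^ n.
Proof.
  induction n. simpl; lra. rewrite S_INR. simpl.
  pose proof (pow_R1_Rle 2 n ltac:(lra)). lra.
Qed.

Definition Dd (w h : C) (n : nat) : C := ((w + h) ^ n - w ^ n - RtoC (INR n) * w ^ (pred n) * h)%C.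

Lemma Dd_rec w h n : Dd w h (S n) = ((w + h) * Dd w h n + RtoC (INR n) * w ^ (pred n) * h * h)%C.
Proof.
  unfold Dd. destruct n.
  - simpl. ring.
  - cbn [pred]. rewrite !S_INR, !RtoC_plus. simpl. ring.
Qed.

Lemma Dd_bound w h rho n : 1 <= rho -> Cmod w + Cmod h <= rho ->
  Cmod (Dd w h n) <= INR n * INR n * rho ^ n * Cmod h ^ 2.
Proof.
  intros Hr Hwh. induction n.
  - unfold Dd. simpl. replace (1 - 1 - 0 * 1 * h)%C with (RtoC 0) by ring. rewrite Cmod_0. lra.
  - rewrite Dd_rec. eapply Rle_trans. apply Cmod_triangle.
    rewrite !Cmod_mult, Cmod_R, Rabs_right by (apply Rle_ge, pos_INR). rewrite Cmod_pow.
    pose proof (Cmod_ge_0 w). pose proof (Cmod_ge_0 h). pose proof (Cmod_ge_0 (Dd w h n)).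
    assert (E1 : Cmod (w + h) <= rho) by (eapply Rle_trans; [apply Cmod_triangle|lra]).
    assert (E2 : Cmod w ^ pred n <= rho ^ S n).
    { apply Rle_trans with (rho ^ pred n). apply pow_incr. split; [auto|lra]. apply Rle_pow; auto. lia. }
    pose proof (pos_INR n). pose proof (pow_le rho n ltac:(lra)).
    pose proof (pow_le (Cmod w) (pred n) H).
    assert (E3 : Cmod (w + h) * Cmod (Dd w h n) <= rho * (INR n * INR n * rho ^ n * Cmod h ^ 2)).
    { apply Rmult_le_compat; auto. apply Cmod_ge_0. }
    assert (E4 : INR n * Cmod w ^ pred n * Cmod h * Cmod h <= INR n * rho ^ S n * Cmod h ^ 2).
    { replace (INR n * Cmod w ^ pred n * Cmod h * Cmod h) with ((INR n * Cmod h ^ 2) * Cmod w ^ pred n) by ring.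
      replace (INR n * rho ^ S n * Cmod h ^ 2) with ((INR n * Cmod h ^ 2) * rho ^ S n) by ring.
      apply Rmult_le_compat_l; auto. apply Rmult_le_pos; auto. apply pow_le; auto. }
    rewrite S_INR. simpl pow in *.
    assert (0 <= INR n * rho * rho ^ n * (Cmod h * (Cmod h * 1))).
    { repeat apply Rmult_le_pos; lra. }
    nra.
Qed.

Lemma PS_deriv_est c A B w h : fbB c A B -> Cmod h <= 1 ->
  Cmod (PS c (w + h) - PS c w - h * PS (dc c) w)%C <= 2 * (A * exp (4 * B * (Cmod w + 1))) * Cmod h ^ 2.
Proof.
  intros Hc Hh. pose proof Hc as [HA [HB Hc']].
  set (rho := Cmod w + 1).
  assert (H1 := HS_PS c A B (w + h) Hc).
  assert (H2 := HSt_scal (RtoC (-1)) _ _ (HS_PS c A B w Hc)).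
  assert (H3 : HSt (fun n => RtoC (INR n) * c n * w ^ (pred n))%C (PS (dc c) w)).
  { apply HSt_decr. simpl. ring.
    generalize (HS_PS _ _ _ w (fb_dc _ _ _ Hc)). apply HSt_ext; auto. }
  apply (HSt_scal (- h)%C) in H3.
  assert (H := HSt_plus _ _ _ _ (HSt_plus _ _ _ _ H1 H2) H3).
  assert (HT : HSt (fun n => c n * Dd w h n)%C (PS c (w + h) - PS c w - h * PS (dc c) w)%C).
  { revert H. apply HSt_ext. intros n. unfold Dd. ring. ring. }
  eapply Rle_trans. apply HSt_bound with (t := fun n => (c n * Dd w h n)%C) (v := fun n => (Cmod h ^ 2 * A) * (4 * B * rho) ^ n / INR (fact n)).
  - intros n. rewrite Cmod_mult.
    assert (rho1 : 1 <= rho) by (unfold rho; pose proof (Cmod_ge_0 w); lra).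
    assert (rhoh : Cmod w + Cmod h <= rho) by (unfold rho; lra).
    pose proof (Dd_bound w h rho n rho1 rhoh) as Db.
    specialize (Hc' n).
    eapply Rle_trans. apply Rmult_le_compat; try apply Cmod_ge_0; eauto.
    pose proof (INR_le_pow2 n). pose proof (pos_INR n).
    assert (Hnn : INR n * INR n <= 4 ^ n).
    { replace 4 with (2 * 2) by ring. rewrite Rpow_mult_distr. apply Rmult_le_compat; auto. }
    pose proof (INR_fact_pos n). pose proof (pow_le B n ltac:(lra)). pose proof (pow_le rho n ltac:(lra)).
    rewrite !Rpow_mult_distr. unfold Rdiv.
    assert (0 < / INR (fact n)) by (apply Rinv_0_lt_compat; auto).
    assert (0 <= Cmod h ^ 2) by (apply pow_le, Cmod_ge_0).
    pose proof (Cmod_ge_0 h).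
    assert (0 <= A * B ^ n * / INR (fact n) * rho ^ n * Cmod h ^ 2) by (repeat apply Rmult_le_pos; lra).
    replace (A * B ^ n * / INR (fact n) * (INR n * INR n * rho ^ n * Cmod h ^ 2))
      with ((A * B ^ n * / INR (fact n) * rho ^ n * Cmod h ^ 2) * (INR n * INR n)) by ring.
    replace (Cmod h ^ 2 * A * (4 ^ n * B ^ n * rho ^ n) * / INR (fact n))
      with ((A * B ^ n * / INR (fact n) * rho ^ n * Cmod h ^ 2) * 4 ^ n) by ring.
    apply Rmult_le_compat_l; auto.
  - apply maj_ser.
  - exact HT.
  - right. unfold rho. ring.
Qed.

Lemma rderiv_est (f : R -> R) t l K d0 : 0 <= K -> 0 < d0 ->
  (forall h, Rabs h < d0 -> Rabs (f (t + h) - f t - h * l) <= K * h ^ 2) -> is_derive f t l.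
Proof.
  intros HK Hd H. apply is_derive_Reals. intros eps Heps.
  assert (Hd' : 0 < Rmin d0 (eps / (K + 1))) by (apply Rmin_pos; auto; apply Rdiv_lt_0_compat; lra).
  exists (mkposreal _ Hd'). intros h Hh0 Hh. simpl in Hh.
  assert (h1 : Rabs h < d0) by (eapply Rlt_le_trans; [exact Hh| apply Rmin_l]).
  assert (h2 : Rabs h < eps / (K + 1)) by (eapply Rlt_le_trans; [exact Hh| apply Rmin_r]).
  specialize (H h h1).
  replace ((f (t + h) - f t) / h - l) with ((f (t + h) - f t - h * l) / h) by (field; auto).
  unfold Rdiv. rewrite Rabs_mult, Rabs_inv.
  assert (0 < Rabs h) by (apply Rabs_pos_lt; auto).
  apply Rle_lt_trans with (K * Rabs h).
  { apply Rmult_le_reg_r with (Rabs h); auto. rewrite Rmult_assoc, Rinv_l, Rmult_1_r by lra.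
    replace (K * Rabs h * Rabs h) with (K * h ^ 2) by (rewrite <- (pow2_abs h); ring). exact H. }
  assert (Rabs h * (K + 1) < eps).
  { apply Rmult_lt_compat_r with (r := K + 1) in h2; [|lra]. unfold Rdiv in h2.
    rewrite Rmult_assoc, Rinv_l, Rmult_1_r in h2 by lra. exact h2. }
  nra.
Qed.

Lemma PS_rderiv c A B z t : fbB c A B ->
  is_derive (fun s : R => Re (PS c (RtoC s * z))) t (Re (z * PS (dc c) (RtoC t * z))) /\
  is_derive (fun s : R => Im (PS c (RtoC s * z))) t (Im (z * PS (dc c) (RtoC t * z))).
Proof.
  intros Hc.
  set (K := 2 * (A * exp (4 * B * (Cmod (RtoC t * z) + 1))) * Cmod z ^ 2).
  assert (HK : 0 <= K).
  { destruct Hc as [HA _]. unfold K. apply Rmult_le_pos. pose proof (exp_pos (4 * B * (Cmod (RtoC t * z) + 1))). nra. apply pow2_ge_0. }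
  assert (Hd : 0 < / (Cmod z + 1)) by (apply Rinv_0_lt_compat; pose proof (Cmod_ge_0 z); lra).
  assert (key : forall h, Rabs h < / (Cmod z + 1) ->
     (PS c (RtoC (t + h) * z) - PS c (RtoC t * z) - RtoC h * (z * PS (dc c) (RtoC t * z)))%C =
     (PS c (RtoC t * z + RtoC h * z) - PS c (RtoC t * z) - (RtoC h * z) * PS (dc c) (RtoC t * z))%C
     /\ Cmod (PS c (RtoC t * z + RtoC h * z) - PS c (RtoC t * z) - (RtoC h * z) * PS (dc c) (RtoC t * z))%C <= K * h ^ 2).
  { intros h Hh. split.
    - rewrite RtoC_plus. replace ((RtoC t + RtoC h) * z)%C with (RtoC t * z + RtoC h * z)%C by ring. ring.
    - eapply Rle_trans. apply PS_deriv_est; eauto.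
      + rewrite Cmod_mult, Cmod_R. pose proof (Cmod_ge_0 z).
        apply Rle_trans with (Rabs h * (Cmod z + 1)). apply Rmult_le_compat_l; [apply Rabs_pos|lra].
        apply Rmult_lt_compat_r with (r := Cmod z + 1) in Hh; [|lra]. rewrite Rinv_l in Hh by lra. lra.
      + unfold K. rewrite (Cmod_mult (RtoC h) z), Cmod_R. rewrite <- (pow2_abs h). right. Rr. }
  split.
  - apply rderiv_est with K (/ (Cmod z + 1)); auto. intros h Hh.
    destruct (key h Hh) as [E1 E2].
    replace (Re (PS c (RtoC (t + h) * z)) - Re (PS c (RtoC t * z)) - h * Re (z * PS (dc c) (RtoC t * z)))
      with (Re (PS c (RtoC (t + h) * z) - PS c (RtoC t * z) - RtoC h * (z * PS (dc c) (RtoC t * z)))%C)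
      by (unfold Re; simpl; ring).
    rewrite E1. eapply Rle_trans. apply re_le_Cmod. auto.
  - apply rderiv_est with K (/ (Cmod z + 1)); auto. intros h Hh.
    destruct (key h Hh) as [E1 E2].
    replace (Im (PS c (RtoC (t + h) * z)) - Im (PS c (RtoC t * z)) - h * Im (z * PS (dc c) (RtoC t * z)))
      with (Im (PS c (RtoC (t + h) * z) - PS c (RtoC t * z) - RtoC h * (z * PS (dc c) (RtoC t * z)))%C)
      by (unfold Im; simpl; ring).
    rewrite E1. eapply Rle_trans. apply Im_le_Cmod. auto.
Qed.

Lemma is_derive_C_est (f : C -> C) w l K : 0 <= K ->
  (forall h, Cmod h <= 1 -> Cmod (f (w + h) - f w - h * l)%C <= K * Cmod h ^ 2) ->
  @is_derive C_AbsRing C_NormedModule f w l.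
Proof.
  intros HK H. split.
  - apply is_linear_scal_l.
  - intros x Hx. pose proof (@is_filter_lim_locally_unique C_AbsRing (AbsRing_NormedModule C_AbsRing) w x Hx) as Ex. subst x.
    intros eps.
    assert (Hd : 0 < Rmin (1 / 2) (eps / (2 * K + 2))).
    { apply Rmin_pos. lra. apply Rdiv_lt_0_compat; [apply cond_pos|lra]. }
    exists (mkposreal _ Hd). intros y Hy.
    change (Cmod (minus y w) < Rmin (1 / 2) (eps / (2 * K + 2))) in Hy.
    set (h := minus y w) in *.
    assert (Hh : Cmod h < 2 * Rmin (1 / 2) (eps / (2 * K + 2))) by lra.
    assert (Hh1 : Cmod h <= 1) by (pose proof (Rmin_l (1/2) (eps / (2 * K + 2))); lra).
    assert (Hh2 : Cmod h * (2 * K + 2) <= 2 * eps).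
    { pose proof (Rmin_r (1/2) (eps / (2 * K + 2))).
      assert (Cmod h <= 2 * (eps / (2 * K + 2))) by lra.
      apply Rmult_le_compat_r with (r := 2 * K + 2) in H1; [|lra].
      unfold Rdiv in H1. rewrite Rmult_assoc, Rmult_assoc, Rinv_l, Rmult_1_r in H1 by lra. lra. }
    assert (Ey : y = (w + h)%C).
    { assert (G : forall y0 : C, y0 = (w + (y0 - w))%C) by (intros; ring). exact (G y). }
    change (Cmod (f y - f w - h * l)%C <= eps * Cmod h).
    rewrite Ey. eapply Rle_trans. apply H; auto.
    pose proof (Cmod_ge_0 h). destruct eps as [e He]. simpl in *.
    nra.
Qed.

Lemma PS_is_derive c A B w : fbB c A B -> @is_derive C_AbsRing C_NormedModule (PS c) w (PS (dc c) w).
Proof.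
  intros Hc. apply is_derive_C_est with (2 * (A * exp (4 * B * (Cmod w + 1)))).
  destruct Hc as [HA _]. pose proof (exp_pos (4 * B * (Cmod w + 1))). nra.
  intros h Hh. apply PS_deriv_est; auto.
Qed.

Lemma is_derive_eq (f : R -> R) x l l' : is_derive f x l -> l = l' -> is_derive f x l'.
Proof. intros H E; subst; auto. Qed.

Lemma rd_mult (f g : R -> R) x df dg : is_derive f x df -> is_derive g x dg ->
  is_derive (fun t => f t * g t) x (df * g x + f x * dg).
Proof. intros H1 H2. apply is_derive_Reals. apply is_derive_Reals in H1, H2. apply (derivable_pt_lim_mult f g); auto. Qed.
Lemma rd_plus (f g : R -> R) x df dg : is_derive f x df -> is_derive g x dg ->
  is_derive (fun t => f t + g t) x (df + dg).
Proof. intros H1 H2. apply is_derive_Reals. apply is_derive_Reals in H1, H2. apply (derivable_pt_lim_plus f g); auto. Qed.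
Lemma rd_minus (f g : R -> R) x df dg : is_derive f x df -> is_derive g x dg ->
  is_derive (fun t => f t - g t) x (df - dg).
Proof. intros H1 H2. apply is_derive_Reals. apply is_derive_Reals in H1, H2. apply (derivable_pt_lim_minus f g); auto. Qed.

Lemma decr_of_deriv (f df : R -> R) a b : a <= b ->
  (forall x, a <= x <= b -> is_derive f x (df x)) -> (forall x, a <= x <= b -> df x <= 0) -> f b <= f a.
Proof.
  intros Hab Hd Hn.
  destruct (MVT_gen f a b df) as [c [Hc E]].
  - intros x Hx. rewrite Rmin_left, Rmax_right in Hx by lra. apply Hd. lra.
  - intros x Hx. rewrite Rmin_left, Rmax_right in Hx by lra. apply continuity_pt_filterlim.
    apply (ex_derive_continuous f). exists (df x). apply Hd; lra.
  - rewrite Rmin_left, Rmax_right in Hc by lra. specialize (Hn c Hc). nra.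
Qed.

Lemma sdecr_of_deriv (f df : R -> R) a b : a < b ->
  (forall x, a <= x <= b -> is_derive f x (df x)) -> (forall x, a <= x <= b -> df x < 0) -> f b < f a.
Proof.
  intros Hab Hd Hn.
  destruct (MVT_gen f a b df) as [c [Hc E]].
  - intros x Hx. rewrite Rmin_left, Rmax_right in Hx by lra. apply Hd. lra.
  - intros x Hx. rewrite Rmin_left, Rmax_right in Hx by lra. apply continuity_pt_filterlim.
    apply (ex_derive_continuous f). exists (df x). apply Hd; lra.
  - rewrite Rmin_left, Rmax_right in Hc by lra. specialize (Hn c Hc). nra.
Qed.

Lemma const_of_deriv (f : R -> R) a b : (forall x, is_derive f x 0) -> f a = f b.
Proof.
  intros H. destruct (Rle_dec a b).
  - apply Rle_antisym.
    + rewrite <- (Ropp_involutive (f a)), <- (Ropp_involutive (f b)). apply Ropp_le_contravar.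
      apply (decr_of_deriv (fun x => - f x) (fun _ => 0)); auto; [|intros; lra].
      intros. apply is_derive_eq with (- 0). apply (is_derive_opp f). auto. Rr.
    + apply (decr_of_deriv f (fun _ => 0)); auto; intros; lra.
  - apply Rle_antisym.
    + apply (decr_of_deriv f (fun _ => 0)); auto; intros; lra.
    + rewrite <- (Ropp_involutive (f a)), <- (Ropp_involutive (f b)). apply Ropp_le_contravar.
      apply (decr_of_deriv (fun x => - f x) (fun _ => 0)); try lra; [|intros; lra].
      intros. apply is_derive_eq with (- 0). apply (is_derive_opp f). auto. Rr.
Qed.

Lemma PS_ext c d w : (forall n, c n = d n) -> PS c w = PS d w.
Proof. intros H. unfold PS. f_equal; apply Series_ext; intros n; rewrite H; auto. Qed.

Lemma PS_0 c A B : fbB c A B -> PS c (RtoC 0) = c O.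
Proof.
  intros Hc. apply HS_unique. pose proof (HS_tl c (RtoC 0) _ (HS_PS _ _ _ (RtoC 0) (fb_tl _ _ _ Hc))) as H.
  revert H. apply HSt_ext; auto. ring.
Qed.

Lemma PS_tl c A B w : fbB c A B -> PS c w = (c O + w * PS (tl c) w)%C.
Proof.
  intros Hc. apply HS_unique. apply HS_tl. apply (HS_PS _ _ _ w (fb_tl _ _ _ Hc)).
Qed.

Definition expc (n : nat) : C := RtoC (/ INR (fact n)).

Lemma fb_expc : fbB expc 1 1.
Proof.
  split; [lra|split;[lra|]]. intros n. unfold expc. rewrite Cmod_R, pow1.
  rewrite Rabs_right. right; unfold Rdiv; ring. apply Rle_ge. left. apply Rinv_0_lt_compat, INR_fact_pos.
Qed.

Lemma dc_expc n : dc expc n = expc n.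
Proof.
  unfold dc, expc. rewrite <- RtoC_mult. f_equal. rewrite fact_simpl, mult_INR.
  pose proof (INR_fact_neq_0 n). pose proof (pos_INR n). rewrite S_INR. field. split; auto. apply Rgt_not_eq. lra.
Qed.

Lemma cexp_mul_opp w : (cexp w * cexp (- w))%C = RtoC 1.
Proof.
  destruct w as [p q]. unfold cexp. cbn [Re Im fst snd Copp].
  rewrite cos_neg, sin_neg.
  apply injective_projections; simpl.
  - replace (exp p * cos q * (exp (- p) * cos q) - exp p * sin q * (exp (- p) * - sin q))
      with ((exp p * exp (- p)) * (sin q * sin q + cos q * cos q)) by ring.
    pose proof (sin2_cos2 q) as SC. unfold Rsqr in SC. rewrite SC, <- exp_plus. replace (p + - p) with 0 by ring. rewrite exp_0. ring.
  - ring.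
Qed.

Lemma PS_exp w : PS expc w = cexp w.
Proof.
  destruct w as [p q].
  set (P1 := fun s => Re (PS expc (RtoC s * (p, q)))).
  set (P2 := fun s => Im (PS expc (RtoC s * (p, q)))).
  set (X1 := fun s => exp (- (s * p)) * cos (- (s * q))).
  set (X2 := fun s => exp (- (s * p)) * sin (- (s * q))).
  assert (DP : forall s, is_derive P1 s (p * P1 s - q * P2 s) /\ is_derive P2 s (p * P2 s + q * P1 s)).
  { intros s. destruct (PS_rderiv expc 1 1 (p, q) s fb_expc) as [D1 D2].
    rewrite (PS_ext _ expc _ dc_expc) in D1, D2. split.
    - eapply is_derive_eq. exact D1. unfold P1, P2. rewrite re_mult. simpl Re; simpl Im. Rr.
    - eapply is_derive_eq. exact D2. unfold P1, P2. rewrite im_mult. simpl Re; simpl Im. Rr. }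
  assert (DX1 : forall s, is_derive X1 s (- p * X1 s + q * X2 s)).
  { intros s. unfold X1, X2. auto_derive. auto. ring. }
  assert (DX2 : forall s, is_derive X2 s (- p * X2 s - q * X1 s)).
  { intros s. unfold X1, X2. auto_derive. auto. ring. }
  assert (R1 : (fun s => P1 s * X1 s - P2 s * X2 s) 0 = (fun s => P1 s * X1 s - P2 s * X2 s) 1).
  { apply (const_of_deriv (fun s => P1 s * X1 s - P2 s * X2 s)). intros s. destruct (DP s) as [D1 D2].
    eapply is_derive_eq. apply rd_minus; apply rd_mult; eauto. Rr. }
  assert (R2 : (fun s => P1 s * X2 s + P2 s * X1 s) 0 = (fun s => P1 s * X2 s + P2 s * X1 s) 1).
  { apply (const_of_deriv (fun s => P1 s * X2 s + P2 s * X1 s)). intros s. destruct (DP s) as [D1 D2].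
    eapply is_derive_eq. apply rd_plus; apply rd_mult; eauto. Rr. }
  cbv beta in R1, R2.
  assert (E0 : PS expc (RtoC 0 * (p, q)) = RtoC 1).
  { replace (RtoC 0 * (p, q))%C with (RtoC 0) by ring. rewrite (PS_0 _ _ _ fb_expc). unfold expc. simpl. f_equal. lra. }
  assert (E1 : (RtoC 1 * (p, q))%C = (p, q)) by ring.
  unfold P1, P2, X1, X2 in R1, R2. rewrite E0, E1 in R1, R2.
  set (W := PS expc (p, q)) in *.
  assert (EW : (W * cexp (- (p, q)))%C = RtoC 1).
  { unfold cexp. cbn [Re Im fst snd Copp].
    rewrite !Rmult_0_l, !Rmult_1_l, Ropp_0, exp_0, cos_0, sin_0 in *.
    replace (Re 1) with 1 in * by reflexivity. replace (Im 1) with 0 in * by reflexivity.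
    destruct W as [w1 w2]. simpl Re in *. simpl Im in *.
    apply injective_projections; simpl; lra. }
  rewrite <- (Cmult_1_r W), <- (cexp_mul_opp (p, q)).
  replace (W * (cexp (p, q) * cexp (- (p, q))))%C with ((W * cexp (- (p, q))) * cexp (p, q))%C by ring.
  rewrite EW. ring.
Qed.

Lemma Ci2 : (Ci * Ci + 1)%C = RtoC 0.
Proof. apply injective_projections; simpl; ring. Qed.
Lemma RtoC_neq x : x <> 0 -> RtoC x <> RtoC 0.
Proof. intros H E. apply H. injection E. auto. Qed.

Definition th (c : nat -> C) (n : nat) : C := (RtoC (INR n) * c n)%C.
Definition lam : C := (- Ci / RtoC 2)%C.

Lemma conv_th p q n : th (conv p q) n = (conv (th p) q n + conv p (th q) n)%C.
Proof.
  unfold th, conv. rewrite <- csum_scal, <- csum_plus. apply csum_ext. intros k Hk.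
  rewrite minus_INR by auto. rewrite RtoC_minus. ring.
Qed.

Lemma conv_shl p q n : conv (sh p) q n = sh (conv p q) n.
Proof.
  destruct n. unfold conv; simpl; ring.
  unfold conv. rewrite csum_first. simpl. ring_simplify. reflexivity.
Qed.

Lemma conv_shr p q n : conv p (sh q) n = sh (conv p q) n.
Proof.
  destruct n. unfold conv; simpl; ring.
  unfold conv. simpl csum at 1. rewrite Nat.sub_diag. simpl sh at 2.
  rewrite Cmult_0_r, Cplus_0_r. simpl sh. apply csum_ext. intros k Hk.
  change (p k * sh q (S n - k) = p k * q (n - k)%nat)%C.
  rewrite Nat.sub_succ_l by auto. reflexivity.
Qed.

Lemma conv_extl u v q n : (forall k, u k = v k) -> conv u q n = conv v q n.
Proof. intros H. unfold conv. apply csum_ext. intros; rewrite H; auto. Qed.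
Lemma conv_extr p u v n : (forall k, u k = v k) -> conv p u n = conv p v n.
Proof. intros H. unfold conv. apply csum_ext. intros; rewrite H; auto. Qed.
Lemma conv_plusl u v q n : conv (fun k => u k + v k)%C q n = (conv u q n + conv v q n)%C.
Proof. unfold conv. rewrite <- csum_plus. apply csum_ext. intros; ring. Qed.
Lemma conv_scall al u q n : conv (fun k => al * u k)%C q n = (al * conv u q n)%C.
Proof. unfold conv. rewrite <- csum_scal. apply csum_ext. intros; ring. Qed.
Lemma conv_scalr al p q n : conv p (fun k => al * q k)%C n = (al * conv p q n)%C.
Proof. unfold conv. rewrite <- csum_scal. apply csum_ext. intros; ring. Qed.

Lemma e_rec_abstract (M X : nat -> C) (a : C) (b : R) :
  (forall n, th X n = (lam * sh X n)%C) ->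
  (forall n, (th (th M) n + RtoC (b - 1) * th M n)%C = (Ci * th (sh M) n + Ci * (a - 1) * sh M n)%C) ->
  forall n, (th (th (conv M X)) n + RtoC (b - 1) * th (conv M X) n)%C =
            (Ci * (a - RtoC b / 2) * sh (conv M X) n - / 4 * sh (sh (conv M X)) n)%C.
Proof.
  intros FX FM.
  set (e := conv M X).
  assert (EA : forall n, th e n = (conv (th M) X n + lam * sh e n)%C).
  { intros n. unfold e. rewrite conv_th. f_equal.
    rewrite (conv_extr _ _ _ _ FX), conv_scalr, conv_shr. reflexivity. }
  assert (EF : forall n, sh (conv (th M) X) n = (sh (th e) n - lam * sh (sh e) n)%C).
  { intros [|n]; simpl. ring. rewrite EA. ring. }
  assert (EG : forall n, th (sh e) n = (sh (th e) n + sh e n)%C).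
  { intros [|n]; unfold th; cbn [sh]. ring. rewrite S_INR, RtoC_plus. ring. }
  intros n.
  assert (EB : th (th e) n = (conv (th (th M)) X n + lam * sh (conv (th M) X) n + lam * th (sh e) n)%C).
  { transitivity (RtoC (INR n) * th e n)%C. reflexivity. rewrite EA.
    transitivity (th (conv (th M) X) n + lam * th (sh e) n)%C. unfold th. ring.
    rewrite conv_th. rewrite (conv_extr _ _ _ _ FX), conv_scalr, conv_shr. ring. }
  assert (EC : (conv (th (th M)) X n + RtoC (b - 1) * conv (th M) X n)%C =
               (Ci * conv (th (sh M)) X n + Ci * (a - 1) * conv (sh M) X n)%C).
  { rewrite <- conv_scall, <- conv_plusl. rewrite (conv_extl _ _ _ _ FM).
    rewrite conv_plusl, !conv_scall. reflexivity. }
  assert (ED : conv (th (sh M)) X n = (th (sh e) n - lam * sh (sh e) n)%C).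
  { assert (H := conv_th (sh M) X n). rewrite (conv_extr _ _ _ _ FX), conv_scalr, conv_shr in H.
    assert (F : conv (sh M) X = sh e) by (apply functional_extensionality; intros; apply conv_shl).
    rewrite F in H. rewrite H. ring. }
  assert (EE : conv (sh M) X n = sh e n) by (apply conv_shl).
  rewrite EB, EA.
  replace (conv (th (th M)) X n) with (Ci * conv (th (sh M)) X n + Ci * (a - 1) * conv (sh M) X n - RtoC (b - 1) * conv (th M) X n)%C
    by (rewrite <- EC; ring).
  rewrite ED, EE, EF, EG. unfold lam. rewrite RtoC_minus.
  match goal with |- ?L = ?R => transitivity (R + (Ci * Ci + 1) * / 4 * sh (sh e) n)%C end.
  field. rewrite Ci2. ring.
Qed.

Lemma exp_le_exp' x y : x <= y -> exp x <= exp y.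
Proof. intros [H|H]. left; apply exp_increasing; auto. subst; lra. Qed.

Lemma HSt_unique t l l' : HSt t l -> HSt t l' -> l = l'.
Proof.
  intros [A1 B1] [A2 B2]. destruct l as [p q], l' as [p' q'].
  apply is_series_unique in A1, A2, B1, B2. simpl in *. congruence.
Qed.

Lemma PS_near0 c A B R : fbB c A B -> exists K, 0 <= K /\ forall w, Cmod w <= R -> Cmod (PS c w - c O)%C <= K * Cmod w.
Proof.
  intros Hc. pose proof (fb_tl _ _ _ Hc) as Ht. pose proof Ht as [HA [HB _]].
  exists (2 * (A * B * exp (B * R))). split.
  { pose proof (exp_pos (B * R)). apply Rmult_le_pos; [lra|]. apply Rmult_le_pos; [|lra]. nra. }
  intros w Hw. rewrite (PS_tl _ _ _ w Hc). replace (c O + w * PS (tl c) w - c O)%C with (w * PS (tl c) w)%C by ring.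
  rewrite Cmod_mult. rewrite Rmult_comm. apply Rmult_le_compat_r. apply Cmod_ge_0.
  eapply Rle_trans. apply (PS_bound _ _ _ w Ht).
  apply Rmult_le_compat_l; [lra|]. apply Rmult_le_compat_l; [nra|]. apply exp_le_exp'.
  apply Rmult_le_compat_l; lra.
Qed.

Lemma ode_pointwise g A B gam tau :
  fbB g A B ->
  (forall n, (RtoC (INR (S n)) * (RtoC (INR n) + RtoC (2 * gam)) * g (S n))%C = (- RtoC tau * g n - / 4 * sh g n)%C) ->
  forall w, (w * PS (dc (dc g)) w + RtoC (2 * gam) * PS (dc g) w + (w / 4 + RtoC tau) * PS g w)%C = RtoC 0.
Proof.
  intros Hg Hrec w.
  pose proof (fb_dc _ _ _ Hg) as H1. pose proof (fb_dc _ _ _ H1) as H2.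
  pose proof (HS_sh _ _ _ (HS_PS _ _ _ w H2)) as S2.
  pose proof (HSt_scal (RtoC (2 * gam)) _ _ (HS_PS _ _ _ w H1)) as S1.
  pose proof (HSt_scal (RtoC tau) _ _ (HS_PS _ _ _ w Hg)) as S0.
  pose proof (HSt_scal (/ 4)%C _ _ (HS_sh _ _ _ (HS_PS _ _ _ w Hg))) as S3.
  pose proof (HSt_plus _ _ _ _ (HSt_plus _ _ _ _ (HSt_plus _ _ _ _ S2 S1) S0) S3) as SS.
  transitivity (w * PS (dc (dc g)) w + RtoC (2 * gam) * PS (dc g) w + RtoC tau * PS g w + / 4 * (w * PS g w))%C.
  field.
  apply (HSt_unique _ _ _ SS). generalize HSt_zero. apply HSt_ext. 2: reflexivity.
  intros n. destruct n.
  - simpl sh. unfold dc. specialize (Hrec O). simpl sh in Hrec. simpl INR in *.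
    replace (RtoC 0) with (RtoC 0 * w ^ 0)%C at 1 by ring.
    rewrite Cmult_0_l. symmetry.
    replace (RtoC (1 + 0)) with (RtoC 1) in * by (f_equal; ring).
    transitivity ((RtoC 1 * (RtoC 0 + RtoC (2 * gam)) * g 1%nat - (- RtoC tau * g O - / 4 * RtoC 0)) * w ^ 0)%C.
    ring. rewrite Hrec. ring.
  - cbn [sh]. unfold dc. specialize (Hrec (S n)). cbn [sh] in Hrec.
    rewrite !S_INR, !RtoC_plus in *. symmetry.
    transitivity (((RtoC (INR n) + 1 + 1) * (RtoC (INR n) + 1 + RtoC (2 * gam)) * g (S (S n)) - (- RtoC tau * g (S n) - / 4 * g n)) * w ^ S n)%C.
    simpl. ring. rewrite Hrec. ring.
Qed.

Lemma inf_small X C p t : 0 <= C -> 0 < p -> 0 < t ->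
  (forall eps, 0 < eps <= t -> X <= C * exp (p * ln eps)) -> X <= 0.
Proof.
  intros HC Hp Ht H. destruct (Rle_dec X 0) as [|Hx]; auto. exfalso.
  assert (HX : 0 < X) by lra.
  set (d := X / (C + 1)). assert (Hd : 0 < d) by (unfold d; apply Rdiv_lt_0_compat; lra).
  set (s := - (Rabs (ln t) + Rabs (ln d) / p + 1)).
  assert (Hs1 : s <= ln t) by (unfold s; pose proof (Rabs_pos (ln d)); pose proof (Rle_abs (- ln t));
     rewrite Rabs_Ropp in *; assert (0 <= Rabs (ln d) / p) by (apply Rdiv_le_0_compat; lra); lra).
  specialize (H (exp s)). rewrite ln_exp in H.
  assert (E1 : exp s <= t) by (rewrite <- (exp_ln t) by auto; apply exp_le_exp'; auto).
  specialize (H (conj (exp_pos s) E1)).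
  assert (E2 : p * s < ln d).
  { unfold s. replace (p * - (Rabs (ln t) + Rabs (ln d) / p + 1)) with (- p * Rabs (ln t) - Rabs (ln d) - p) by (field; lra).
    pose proof (Rabs_pos (ln t)). pose proof (Rle_abs (- ln d)). rewrite Rabs_Ropp in *. nra. }
  apply exp_increasing in E2. rewrite exp_ln in E2 by auto.
  assert (C * exp (p * s) <= C * d) by (apply Rmult_le_compat_l; lra).
  assert (C * d < X).
  { unfold d. apply Rmult_lt_reg_r with (C + 1); [lra|].
    replace (C * (X / (C + 1)) * (C + 1)) with (C * X) by (field; lra). nra. }
  lra.
Qed.

Lemma le_small X K : 0 <= K -> (forall t, 0 < t < 1 -> X <= K * t) -> X <= 0.
Proof.
  intros HK H. destruct (Rle_dec X 0) as [|Hx]; auto. exfalso.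
  set (t := Rmin (1/2) (X / (2 * K + 2))).
  assert (Ht1 : 0 < t) by (apply Rmin_pos; [lra|apply Rdiv_lt_0_compat; lra]).
  assert (Ht2 : t < 1) by (pose proof (Rmin_l (1/2) (X / (2 * K + 2))); unfold t; lra).
  specialize (H t (conj Ht1 Ht2)).
  assert (t * (2 * K + 2) <= X).
  { pose proof (Rmin_r (1/2) (X / (2 * K + 2))). fold t in H0.
    apply Rmult_le_compat_r with (r := 2 * K + 2) in H0; [|lra]. unfold Rdiv in H0.
    rewrite Rmult_assoc, Rinv_l, Rmult_1_r in H0 by lra. lra. }
  nra.
Qed.

Lemma im_bound (g0 g1 al be : C) : Im g0 = 0 -> Im g1 = 0 ->
  Rabs (Im ((g1 + be) * Cconj (g0 + al))%C) <= Cmod g1 * Cmod al + Cmod be * Cmod g0 + Cmod be * Cmod al.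
Proof.
  intros H0 H1.
  replace ((g1 + be) * Cconj (g0 + al))%C with (g1 * Cconj g0 + (g1 * Cconj al + be * Cconj g0 + be * Cconj al))%C
    by (rewrite Cplus_conj; ring).
  rewrite im_plus. replace (Im (g1 * Cconj g0)%C) with 0 by (rewrite im_mult, im_conj, H0, H1; ring).
  rewrite Rplus_0_l. eapply Rle_trans. apply Im_le_Cmod.
  eapply Rle_trans. apply Cmod_triangle. rewrite !Cmod_mult, !Cmod_conj.
  pose proof (Cmod_triangle (g1 * Cconj al) (be * Cconj g0)). rewrite !Cmod_mult, !Cmod_conj in H. lra.
Qed.

Lemma ray g A B gam tau z :
  fbB g A B -> (forall n, Im (g n) = 0) ->
  (forall n, (RtoC (INR (S n)) * (RtoC (INR n) + RtoC (2 * gam)) * g (S n))%C = (- RtoC tau * g n - / 4 * sh g n)%C) ->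
  -1/2 < gam -> 0 < Im z ->
  Im (PS (dc g) z * Cconj (PS g z)) <= 0 /\
  (Im (PS (dc g) z * Cconj (PS g z)) = 0 -> g O = RtoC 0 /\ dc g O = RtoC 0).
Proof.
  intros Hg Hreal Hrec Hgam Hy.
  pose proof (fb_dc _ _ _ Hg) as H1. pose proof (fb_dc _ _ _ H1) as H2.
  destruct z as [zr y]. simpl in Hy.
  set (U := fun t : R => PS g (RtoC t * (zr, y))).
  set (V := fun t : R => PS (dc g) (RtoC t * (zr, y))).
  set (W := fun t : R => PS (dc (dc g)) (RtoC t * (zr, y))).
  assert (DU : forall t, is_derive (fun s => Re (U s)) t (zr * Re (V t) - y * Im (V t)) /\
                         is_derive (fun s => Im (U s)) t (zr * Im (V t) + y * Re (V t))).
  { intros t. destruct (PS_rderiv _ _ _ (zr, y) t Hg) as [D1 D2]. split.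
    - eapply is_derive_eq. exact D1. fold (V t). rewrite re_mult. change (Re (zr, y)) with zr. change (Im (zr, y)) with y. Rr.
    - eapply is_derive_eq. exact D2. fold (V t). rewrite im_mult. change (Re (zr, y)) with zr. change (Im (zr, y)) with y. Rr. }
  assert (DV : forall t, is_derive (fun s => Re (V s)) t (zr * Re (W t) - y * Im (W t)) /\
                         is_derive (fun s => Im (V s)) t (zr * Im (W t) + y * Re (W t))).
  { intros t. destruct (PS_rderiv _ _ _ (zr, y) t H1) as [D1 D2]. split.
    - eapply is_derive_eq. exact D1. fold (W t). rewrite re_mult. change (Re (zr, y)) with zr. change (Im (zr, y)) with y. Rr.
    - eapply is_derive_eq. exact D2. fold (W t). rewrite im_mult. change (Re (zr, y)) with zr. change (Im (zr, y)) with y. Rr. }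
  assert (ODE : forall t,
    t * (zr * Re (W t) - y * Im (W t)) = - (2 * gam) * Re (V t) - (t * zr / 4 + tau) * Re (U t) + t * y / 4 * Im (U t) /\
    t * (zr * Im (W t) + y * Re (W t)) = - (2 * gam) * Im (V t) - (t * zr / 4 + tau) * Im (U t) - t * y / 4 * Re (U t)).
  { intros t. pose proof (ode_pointwise _ _ _ _ _ Hg Hrec (RtoC t * (zr, y))) as E.
    change (PS g (RtoC t * (zr, y))) with (U t) in E.
    change (PS (dc g) (RtoC t * (zr, y))) with (V t) in E.
    change (PS (dc (dc g)) (RtoC t * (zr, y))) with (W t) in E.
    destruct (U t) as [u1 u2]. destruct (V t) as [v1 v2]. destruct (W t) as [w1 w2].
    pose proof (f_equal fst E) as E1. pose proof (f_equal snd E) as E2. simpl in E1, E2. simpl.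
    split; lra. }
  set (k := fun t => Im (V t) * Re (U t) - Re (V t) * Im (U t)).
  set (Q := fun t => exp (2 * gam * ln t) * k t).
  set (dQ := fun t => - (exp (2 * gam * ln t) * y * ((Re (U t) ^ 2 + Im (U t) ^ 2) / 4 + Re (V t) ^ 2 + Im (V t) ^ 2))).
  assert (DQ : forall t, 0 < t -> is_derive Q t (dQ t)).
  { intros t Ht.
    assert (De : is_derive (fun s => exp (2 * gam * ln s)) t (exp (2 * gam * ln t) * (2 * gam / t))).
    { auto_derive. lra. field. lra. }
    destruct (DU t) as [DU1 DU2]. destruct (DV t) as [DV1 DV2].
    pose proof (rd_minus _ _ _ _ _ (rd_mult _ _ _ _ _ DV2 DU1) (rd_mult _ _ _ _ _ DV1 DU2)) as Dk.
    pose proof (rd_mult _ _ _ _ _ De Dk) as D.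
    eapply is_derive_eq. exact D.
    destruct (ODE t) as [O1 O2]. unfold dQ, k.
    destruct (U t) as [u1 u2]. destruct (V t) as [v1 v2]. destruct (W t) as [w1 w2]. simpl Re in *. simpl Im in *.
    set (e := exp (2 * gam * ln t)).
    assert (KEY : 2 * gam * (v2 * u1 - v1 * u2) +
        t * ((zr * w2 + y * w1) * u1 + v2 * (zr * v1 - y * v2) - ((zr * w1 - y * w2) * u2 + v1 * (zr * v2 + y * v1)))
        = - t * y * ((u1 ^ 2 + u2 ^ 2) / 4 + v1 ^ 2 + v2 ^ 2)).
    { replace (t * ((zr * w2 + y * w1) * u1 + v2 * (zr * v1 - y * v2) - ((zr * w1 - y * w2) * u2 + v1 * (zr * v2 + y * v1))))
        with (u1 * (t * (zr * w2 + y * w1)) - u2 * (t * (zr * w1 - y * w2)) + t * (v2 * (zr * v1 - y * v2) - v1 * (zr * v2 + y * v1))) by ring.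
      rewrite O1, O2. field. }
    apply Rmult_eq_reg_l with t; [|lra].
    replace (t * (e * (2 * gam / t) * (v2 * u1 - v1 * u2) + e * ((zr * w2 + y * w1) * u1 + v2 * (zr * v1 - y * v2) - ((zr * w1 - y * w2) * u2 + v1 * (zr * v2 + y * v1)))))
      with (e * (2 * gam * (v2 * u1 - v1 * u2) + t * ((zr * w2 + y * w1) * u1 + v2 * (zr * v1 - y * v2) - ((zr * w1 - y * w2) * u2 + v1 * (zr * v2 + y * v1))))) by (field; lra).
    rewrite KEY. Rr. }
  assert (Kk : forall t, k t = Im (V t * Cconj (U t))%C).
  { intros t. unfold k. rewrite im_mult, re_conj, im_conj. ring. }
  assert (dQneg : forall t, dQ t <= 0).
  { intros t. unfold dQ. pose proof (exp_pos (2 * gam * ln t)).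
    assert (0 <= (Re (U t) ^ 2 + Im (U t) ^ 2) / 4 + Re (V t) ^ 2 + Im (V t) ^ 2).
    { pose proof (pow2_ge_0 (Re (U t))). pose proof (pow2_ge_0 (Im (U t))).
      pose proof (pow2_ge_0 (Re (V t))). pose proof (pow2_ge_0 (Im (V t))). lra. }
    assert (0 <= exp (2 * gam * ln t) * y * ((Re (U t) ^ 2 + Im (U t) ^ 2) / 4 + Re (V t) ^ 2 + Im (V t) ^ 2)).
    { apply Rmult_le_pos; auto. apply Rmult_le_pos; lra. }
    lra. }
  assert (Qdecr : forall a b, 0 < a -> a <= b -> Q b <= Q a).
  { intros a b Ha Hab. apply (decr_of_deriv Q dQ a b Hab).
    intros x Hx. apply DQ. lra. intros x _. apply dQneg. }
  destruct (PS_near0 _ _ _ (Cmod (zr, y)) Hg) as [K0 [HK0 N0]].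
  destruct (PS_near0 _ _ _ (Cmod (zr, y)) H1) as [K1 [HK1 N1]].
  assert (Hg0 : Im (g O) = 0) by apply Hreal.
  assert (Hg1 : Im (dc g O) = 0).
  { unfold dc. rewrite im_mult. rewrite Hreal. simpl. ring. }
  assert (Hsmall : forall t, 0 < t <= 1 -> Cmod (RtoC t * (zr, y))%C <= Cmod (zr, y) /\ Cmod (RtoC t * (zr, y))%C = t * Cmod (zr, y)).
  { intros t Ht. rewrite Cmod_mult, Cmod_R, Rabs_right by lra. pose proof (Cmod_ge_0 (zr, y)). split; nra. }
  set (Cz := Cmod (zr, y)).
  set (Cq := Cmod (dc g O) * (K0 * Cz) + K1 * Cz * Cmod (g O) + K1 * Cz * (K0 * Cz)).
  assert (HCq : 0 <= Cq).
  { unfold Cq. pose proof (Cmod_ge_0 (dc g O)). pose proof (Cmod_ge_0 (g O)). pose proof (Cmod_ge_0 (zr, y)).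
    fold Cz in H0. repeat apply Rplus_le_le_0_compat; repeat apply Rmult_le_pos; auto. }
  assert (kb : forall t, 0 < t <= 1 -> Rabs (k t) <= Cq * t).
  { intros t Ht. rewrite Kk. destruct (Hsmall t Ht) as [S1 S2].
    pose proof (N0 _ S1) as A0. pose proof (N1 _ S1) as A1. fold Cz in S1, S2. rewrite S2 in A0, A1.
    replace (V t) with (dc g O + (V t - dc g O))%C by ring.
    replace (U t) with (g O + (U t - g O))%C by ring.
    eapply Rle_trans. apply im_bound; auto.
    pose proof (Cmod_ge_0 (dc g O)). pose proof (Cmod_ge_0 (g O)). pose proof (Cmod_ge_0 (zr, y)). fold Cz in H3.
    pose proof (Cmod_ge_0 (U t - g O)%C). pose proof (Cmod_ge_0 (V t - dc g O)%C).
    unfold Cq.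
    assert (Cmod (dc g O) * Cmod (U t - g O)%C <= Cmod (dc g O) * (K0 * Cz) * t).
    { rewrite Rmult_assoc. apply Rmult_le_compat_l; auto. unfold V, U in *. nra. }
    assert (Cmod (V t - dc g O)%C * Cmod (g O) <= K1 * Cz * Cmod (g O) * t).
    { unfold V, U in *. nra. }
    assert (Cmod (V t - dc g O)%C * Cmod (U t - g O)%C <= K1 * Cz * (K0 * Cz) * t).
    { assert (Cmod (V t - dc g O)%C * Cmod (U t - g O)%C <= (K1 * (t * Cz)) * (K0 * (t * Cz))).
      { apply Rmult_le_compat; auto. }
      assert (0 <= K1 * Cz * (K0 * Cz)) by (repeat apply Rmult_le_pos; auto).
      replace (K1 * (t * Cz) * (K0 * (t * Cz))) with ((K1 * Cz * (K0 * Cz)) * (t * t)) in H8 by ring.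
      assert ((K1 * Cz * (K0 * Cz)) * (t * t) <= (K1 * Cz * (K0 * Cz)) * t).
      { apply Rmult_le_compat_l; auto. nra. }
      lra. }
    lra. }
  assert (Qb : forall eps, 0 < eps <= 1 -> Q eps <= Cq * exp ((2 * gam + 1) * ln eps)).
  { intros eps He. unfold Q. pose proof (kb eps He) as Hk0. pose proof (Rle_abs (k eps)) as Hk1. assert (Hk : k eps <= Cq * eps) by lra.
    replace ((2 * gam + 1) * ln eps) with (2 * gam * ln eps + ln eps) by ring. rewrite exp_plus, exp_ln by lra.
    pose proof (exp_pos (2 * gam * ln eps)). nra. }
  assert (QN : forall t, 0 < t <= 1 -> Q t <= 0).
  { intros t Ht. apply (inf_small (Q t) Cq (2 * gam + 1) t); auto; try lra.
    intros eps He. apply Rle_trans with (Q eps). apply Qdecr; lra. apply Qb. lra. }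
  assert (Q1 : Q 1 = Im (PS (dc g) (zr, y) * Cconj (PS g (zr, y)))).
  { unfold Q. rewrite ln_1, Rmult_0_r, exp_0, Rmult_1_l, Kk. unfold U, V.
    rewrite !Cmult_1_l. reflexivity. }
  split.
  { rewrite <- Q1. apply QN. lra. }
  intros HQ. rewrite <- Q1 in HQ.
  assert (Qz : forall t, 0 < t <= 1 -> Q t = 0).
  { intros t Ht. apply Rle_antisym. apply QN; auto. rewrite <- HQ. apply Qdecr; lra. }
  assert (Z : forall t, 0 < t < 1 -> exists xi, 0 < xi <= t /\ U xi = RtoC 0 /\ V xi = RtoC 0).
  { intros t Ht. destruct (MVT_gen Q (t / 2) t dQ) as [xi [Hxi E]].
    - intros x Hx. rewrite Rmin_left, Rmax_right in Hx by lra. apply DQ. lra.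
    - intros x Hx. rewrite Rmin_left, Rmax_right in Hx by lra. apply continuity_pt_filterlim.
      apply (ex_derive_continuous Q). exists (dQ x). apply DQ. lra.
    - rewrite Rmin_left, Rmax_right in Hxi by lra.
      rewrite !Qz in E by lra.
      assert (dQ xi = 0) by (assert (t - t / 2 > 0) by lra; nra).
      exists xi. split. lra.
      unfold dQ in H. pose proof (exp_pos (2 * gam * ln xi)).
      assert (S0 : (Re (U xi) ^ 2 + Im (U xi) ^ 2) / 4 + Re (V xi) ^ 2 + Im (V xi) ^ 2 = 0).
      { assert (exp (2 * gam * ln xi) * y <> 0) by (apply Rgt_not_eq; nra).
        apply (Rmult_eq_reg_l (exp (2 * gam * ln xi) * y)); auto. lra. }
      pose proof (pow2_ge_0 (Re (U xi))). pose proof (pow2_ge_0 (Im (U xi))).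
      pose proof (pow2_ge_0 (Re (V xi))). pose proof (pow2_ge_0 (Im (V xi))).
      destruct (U xi) as [u1 u2]. destruct (V xi) as [v1 v2]. simpl in *.
      split; apply injective_projections; simpl; nra. }
  split.
  - apply Cmod_eq_0. apply Rle_antisym; [|apply Cmod_ge_0].
    apply (le_small _ (K0 * Cz)). apply Rmult_le_pos; auto. apply Cmod_ge_0.
    intros t Ht. destruct (Z t Ht) as [xi [Hxi [EU EV]]].
    destruct (Hsmall xi ltac:(lra)) as [S1 S2]. pose proof (N0 _ S1) as A0. fold Cz in S2. rewrite S2 in A0.
    change (PS g (RtoC xi * (zr, y))) with (U xi) in A0. rewrite EU in A0.
    replace (RtoC 0 - g O)%C with (- g O)%C in A0 by ring. rewrite Cmod_opp in A0.
    pose proof (Cmod_ge_0 (zr, y)). fold Cz in H. assert (0 <= K0 * Cz) by (apply Rmult_le_pos; auto).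
    replace (K0 * (xi * Cz)) with ((K0 * Cz) * xi) in A0 by ring. nra.
  - apply Cmod_eq_0. apply Rle_antisym; [|apply Cmod_ge_0].
    apply (le_small _ (K1 * Cz)). apply Rmult_le_pos; auto. apply Cmod_ge_0.
    intros t Ht. destruct (Z t Ht) as [xi [Hxi [EU EV]]].
    destruct (Hsmall xi ltac:(lra)) as [S1 S2]. pose proof (N1 _ S1) as A1. fold Cz in S2. rewrite S2 in A1.
    change (PS (dc g) (RtoC xi * (zr, y))) with (V xi) in A1. rewrite EV in A1.
    replace (RtoC 0 - dc g O)%C with (- dc g O)%C in A1 by ring. rewrite Cmod_opp in A1.
    pose proof (Cmod_ge_0 (zr, y)). fold Cz in H. assert (0 <= K1 * Cz) by (apply Rmult_le_pos; auto).
    replace (K1 * (xi * Cz)) with ((K1 * Cz) * xi) in A1 by ring. nra.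
Qed.
Definition mm (a bb : C) (n : nat) : C := (poch a n / poch bb n / RtoC (INR (fact n)))%C.
Definition mt (a bb : C) (n : nat) : C := (mm a bb n * Ci ^ n)%C.
Definition xt (n : nat) : C := (lam ^ n * expc n)%C.

Fixpoint prR (be : R) (n : nat) : R := match n with O => 1 | S k => prR be k * (be + INR k) end.

Lemma poch_R be n : poch (RtoC be) n = RtoC (prR be n).
Proof. induction n; simpl. reflexivity. rewrite IHn, RtoC_mult, RtoC_plus. reflexivity. Qed.

Lemma prR_pos be n : 0 < be -> 0 < prR be n.
Proof. intros H. induction n; simpl. lra. pose proof (pos_INR n). apply Rmult_lt_0_compat; lra. Qed.

Lemma fb_pow c A B u : fbB c A B -> Cmod u <= 1 -> fbB (fun n => c n * u ^ n)%C A B.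
Proof.
  intros [HA [HB Hc]] Hu. split; auto. split; auto. intros n. rewrite Cmod_mult, Cmod_pow.
  pose proof (pow_le (Cmod u) n (Cmod_ge_0 u)). pose proof (pow_incr (Cmod u) 1 n (conj (Cmod_ge_0 u) Hu)).
  rewrite pow1 in H0. pose proof (Cmod_ge_0 (c n)). specialize (Hc n).
  assert (Cmod (c n) * Cmod u ^ n <= Cmod (c n)) by nra. lra.
Qed.

Lemma fb_mm a be : 0 < be -> fbB (mm a (RtoC be)) 1 (1 + Cmod a / be).
Proof.
  intros Hb. set (B := 1 + Cmod a / be).
  assert (HB : 1 <= B) by (unfold B; pose proof (Cmod_ge_0 a); assert (0 <= Cmod a / be) by (apply Rdiv_le_0_compat; lra); lra).
  assert (P : forall n, Cmod (poch a n) <= B ^ n * prR be n).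
  { induction n; simpl. rewrite Cmod_1. lra.
    rewrite Cmod_mult. pose proof (prR_pos be n Hb). pose proof (pos_INR n).
    assert (Cmod (a + RtoC (INR n)) <= B * (be + INR n)).
    { eapply Rle_trans. apply Cmod_triangle. rewrite Cmod_R, Rabs_right by lra.
      replace (B * (be + INR n)) with (be + INR n + Cmod a + Cmod a * INR n / be) by (unfold B; field; lra).
      assert (0 <= Cmod a * INR n / be) by (apply Rdiv_le_0_compat; [apply Rmult_le_pos; [apply Cmod_ge_0|lra]|lra]).
      lra. }
    pose proof (Cmod_ge_0 (poch a n)). pose proof (Cmod_ge_0 (a + RtoC (INR n))).
    eapply Rle_trans. apply Rmult_le_compat; eauto. right. ring. }
  split; [lra|split; auto]. intros n. unfold mm.
  pose proof (prR_pos be n Hb). pose proof (INR_fact_pos n).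
  rewrite poch_R. rewrite !Cmod_div, !Cmod_R, !Rabs_right by (try lra; try (apply RtoC_neq; lra)).
  specialize (P n). unfold Rdiv. rewrite Rmult_1_l.
  apply Rmult_le_compat_r. left; apply Rinv_0_lt_compat; auto.
  apply Rmult_le_reg_r with (prR be n); auto. rewrite Rmult_assoc, Rinv_l, Rmult_1_r by lra. auto.
Qed.

Lemma RtoC_neq_INR_S n : RtoC (INR (S n)) <> RtoC 0.
Proof. apply RtoC_neq. apply Rgt_not_eq. apply lt_0_INR. lia. Qed.

Lemma mm_rec a be k : 0 < be ->
  (RtoC (INR (S k)) * (RtoC (INR k) + RtoC be) * mm a (RtoC be) (S k) = (a + RtoC (INR k)) * mm a (RtoC be) k)%C.
Proof.
  intros Hb. unfold mm. simpl poch. rewrite fact_simpl, mult_INR, RtoC_mult, poch_R.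
  pose proof (prR_pos be k Hb). pose proof (INR_fact_pos k). pose proof (pos_INR k).
  assert (RtoC (prR be k) <> RtoC 0) by (apply RtoC_neq; lra).
  assert (RtoC (INR (fact k)) <> RtoC 0) by (apply RtoC_neq; lra).
  assert (RtoC be + RtoC (INR k) <> RtoC 0)%C by (rewrite <- RtoC_plus; apply RtoC_neq; lra).
  pose proof (RtoC_neq_INR_S k).
  field. repeat split; auto.
Qed.

Lemma FM_mt a be : 0 < be -> forall n,
  (th (th (mt a (RtoC be))) n + RtoC (be - 1) * th (mt a (RtoC be)) n)%C =
  (Ci * th (sh (mt a (RtoC be))) n + Ci * (a - 1) * sh (mt a (RtoC be)) n)%C.
Proof.
  intros Hb [|k].
  - unfold th. simpl. ring.
  - unfold th. cbn [sh]. unfold mt.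
    pose proof (mm_rec a be k Hb) as R.
    replace (RtoC (INR (S k)) * (RtoC (INR (S k)) * (mm a (RtoC be) (S k) * Ci ^ S k)) +
      RtoC (be - 1) * (RtoC (INR (S k)) * (mm a (RtoC be) (S k) * Ci ^ S k)))%C
      with ((RtoC (INR (S k)) * (RtoC (INR k) + RtoC be) * mm a (RtoC be) (S k)) * Ci ^ S k)%C
      by (rewrite RtoC_minus, !S_INR, !RtoC_plus; ring).
    rewrite R. rewrite S_INR, RtoC_plus. simpl. ring.
Qed.

Lemma FX_xt n : th xt n = (lam * sh xt n)%C.
Proof.
  destruct n as [|k].
  - unfold th. simpl. ring.
  - unfold th, xt. cbn [sh]. pose proof (dc_expc k) as D. unfold dc in D.
    replace (RtoC (INR (S k)) * (lam ^ S k * expc (S k)))%C with (lam ^ S k * (RtoC (INR (S k)) * expc (S k)))%C by ring.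
    rewrite D. simpl. ring.
Qed.

Lemma Cmod_lam : Cmod lam <= 1.
Proof.
  unfold lam. rewrite Cmod_div by (apply RtoC_neq; lra). rewrite Cmod_opp, Cmod_Ci, Cmod_R, Rabs_right by lra. lra.
Qed.

Lemma fb_mt a be : 0 < be -> fbB (mt a (RtoC be)) 1 (1 + Cmod a / be).
Proof. intros Hb. apply fb_pow. apply fb_mm; auto. rewrite Cmod_Ci. lra. Qed.

Lemma fb_xt : fbB xt 1 1.
Proof.
  apply (fb_ext (fun n => expc n * lam ^ n)%C). intros; unfold xt; ring.
  apply fb_pow. apply fb_expc. apply Cmod_lam.
Qed.

Definition ee (a : C) (be : R) := conv (mt a (RtoC be)) xt.

Lemma ee_rec a be : 0 < be -> forall n,
  (RtoC (INR (S n)) * (RtoC (INR n) + RtoC be) * ee a be (S n))%C =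
  (Ci * (a - RtoC be / 2) * ee a be n - / 4 * sh (ee a be) n)%C.
Proof.
  intros Hb n. pose proof (e_rec_abstract (mt a (RtoC be)) xt a be FX_xt (FM_mt a be Hb) (S n)) as H.
  fold (ee a be) in H. unfold th in H. cbn [sh] in H.
  rewrite <- H. rewrite RtoC_minus, !S_INR, !RtoC_plus. ring.
Qed.

Lemma ee_0 a be : ee a be O = RtoC 1.
Proof. unfold ee, conv, mt, mm, xt, expc. simpl. apply injective_projections; simpl; field. Qed.

Lemma fb_ee a be : 0 < be -> fbB (ee a be) (1 * 1) (1 + Cmod a / be + 1).
Proof. intros Hb. apply fb_conv. apply fb_mt; auto. apply fb_xt. Qed.

Lemma PS_scale c u w : PS c (u * w)%C = PS (fun n => c n * u ^ n)%C w.
Proof.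
  unfold PS. f_equal; apply Series_ext; intros n; rewrite Cpow_mult_l, Cmult_assoc; reflexivity.
Qed.

Lemma bridge_hyp a be w : 0 < be -> hyp1F1 a (RtoC be) w = PS (mm a (RtoC be)) w.
Proof.
  intros Hb. unfold hyp1F1. destruct (HS_PS _ _ _ w (fb_mm a be Hb)) as [A1 B1].
  apply lim_C_series.
  - revert A1. apply ser_ext; auto. intros n. unfold hyp1F1_term, mm, Cdiv. f_equal. ring.
  - revert B1. apply ser_ext; auto. intros n. unfold hyp1F1_term, mm, Cdiv. f_equal. ring.
Qed.

Lemma bridge_exp z : cexp (- (Ci * z) / RtoC 2)%C = PS xt z.
Proof.
  rewrite <- PS_exp. replace (- (Ci * z) / RtoC 2)%C with (lam * z)%C by (unfold lam; field; apply RtoC_neq; lra).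
  rewrite PS_scale. apply PS_ext. intros n. unfold xt. ring.
Qed.

Lemma bridge a be z : 0 < be ->
  (hyp1F1 a (RtoC be) (Ci * z) * cexp (- (Ci * z) / RtoC 2))%C = PS (ee a be) z.
Proof.
  intros Hb. rewrite bridge_hyp, bridge_exp by auto. rewrite PS_scale.
  symmetry. apply HS_unique. apply (HS_mult _ _ _ _ _ _ z (fb_mt a be Hb) fb_xt).
Qed.

Lemma xy_ind (x y xs ys : nat -> R) tau be : 0 < be ->
  (forall n, xs (S n) = x n) -> (forall n, ys (S n) = y n) -> xs O = 0 -> ys O = 0 ->
  (forall n, INR (S n) * (INR n + be) * x (S n) = - tau * x n + y n / 2 - xs n / 4) ->
  (forall n, INR (S n) * (INR n + be) * y (S n) = - tau * y n - x n / 2 - ys n / 4) ->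
  y O = 2 * x 1%nat ->
  forall n, y n = 2 * INR (S n) * x (S n).
Proof.
  intros Hb Hxs Hys Hxs0 Hys0 Rx Ry H0.
  assert (forall n, y n = 2 * INR (S n) * x (S n) /\ y (S n) = 2 * INR (S (S n)) * x (S (S n))).
  { induction n.
    - split. rewrite H0. simpl. ring.
      pose proof (Ry O) as I0. pose proof (Rx 1%nat) as R1. rewrite Hys0 in I0. rewrite Hxs in R1.
      rewrite H0 in I0. simpl INR in *.
      apply Rmult_eq_reg_l with (1 + be); [|lra]. lra.
    - destruct IHn as [P0 P1]. split; auto.
      pose proof (Ry (S n)) as I1. pose proof (Rx (S (S n))) as R2.
      rewrite Hys in I1. rewrite Hxs in R2. rewrite P0, P1 in I1.
      rewrite !S_INR in *. pose proof (pos_INR n).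
      set (N := INR n) in *.
      assert (E1 : (N + 1 + be) * y (S (S n)) = - 2 * tau * x (S (S n)) - x (S n) / 2).
      { apply Rmult_eq_reg_l with (N + 1 + 1); [|lra]. lra. }
      apply Rmult_eq_reg_l with (N + 1 + 1 + be); [|lra]. lra. }
  intros n. apply H.
Qed.
Lemma re2_conj c : RtoC (2 * Re c) = (c + Cconj c)%C.
Proof. destruct c as [p q]. apply injective_projections; simpl; ring. Qed.

Lemma lam_pair : lam = (0, - (1/2)).
Proof. unfold lam. apply injective_projections; simpl; field. Qed.

Lemma im_lam c : RtoC (Im c) = (lam * (c - Cconj c))%C.
Proof. rewrite lam_pair. destruct c as [p q]. apply injective_projections; simpl; field. Qed.

Lemma key_id psi phi : Im (lam * (psi - phi) * Cconj (psi + phi))%C = - (Cmod psi ^ 2 - Cmod phi ^ 2) / 2.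
Proof.
  rewrite !Cmod2_alt. rewrite lam_pair. destruct psi as [p1 p2], phi as [f1 f2]. simpl. field.
Qed.

Lemma Cmod_cexp u v : Cmod (cexp (u, v)) = exp u.
Proof.
  unfold cexp, Cmod. cbn [Re Im fst snd].
  replace ((exp u * cos v) ^ 2 + (exp u * sin v) ^ 2) with (exp u ^ 2).
  apply sqrt_pow2. left; apply exp_pos.
  pose proof (sin2_cos2 v) as SC. unfold Rsqr in SC.
  replace ((exp u * cos v) ^ 2 + (exp u * sin v) ^ 2) with (exp u ^ 2 * (sin v * sin v + cos v * cos v)) by ring.
  rewrite SC. ring.
Qed.

Lemma arg_half z : (- (Ci * z) / RtoC 2)%C = (Im z / 2, - Re z / 2).
Proof. destruct z as [p q]. apply injective_projections; simpl; field. Qed.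

Lemma poch0 n : poch (RtoC 0) (S n) = RtoC 0.
Proof. induction n. simpl. ring. simpl poch. simpl in IHn. rewrite IHn. ring. Qed.

Lemma coef_id gam tau :
  (Ci * ((RtoC gam + Ci * RtoC tau)%C - RtoC (2 * gam + 1) / 2))%C = (- tau, - (1/2)).
Proof. apply injective_projections; simpl; field. Qed.

Lemma inv4 : (/ 4)%C = RtoC (/ 4).
Proof. rewrite RtoC_inv by lra. reflexivity. Qed.

Lemma main_case gamma tau : -1/2 < gamma -> ~ (gamma = 0 /\ tau = 0) ->
  forall z, 0 < Im z ->
  PS (ee (RtoC gamma + Ci * RtoC tau)%C (2 * gamma + 1)) z <> RtoC 0 /\
  Cmod (PS (ee (RtoC gamma + Ci * RtoC tau)%C (2 * gamma + 1)) (Cconj z)) <=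
  Cmod (PS (ee (RtoC gamma + Ci * RtoC tau)%C (2 * gamma + 1)) z).
Proof.
  intros Hg Hnz z Hz.
  set (a := (RtoC gamma + Ci * RtoC tau)%C).
  set (be := 2 * gamma + 1).
  assert (Hb : 0 < be) by (unfold be; lra).
  set (e := ee a be).
  pose proof (fb_ee a be Hb) as He. fold e in He.
  set (r := fun n => (Cconj a * e n)%C).
  set (x := fun n => Re (r n)). set (y := fun n => Im (r n)).
  set (xs := fun n => Re (sh r n)). set (ys := fun n => Im (sh r n)).
  assert (rrec : forall n, (RtoC (INR (S n) * (INR n + be)) * r (S n))%C =
             ((((- tau)%R, (- (1/2))%R) : C) * r n - RtoC (/ 4) * sh r n)%C).
  { intros n. unfold r. pose proof (ee_rec a be Hb n) as H. fold e in H.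
    unfold a, be in H. rewrite coef_id, inv4 in H. fold be in H. fold a in H.
    replace (sh (fun n => Cconj a * e n)%C n) with (Cconj a * sh e n)%C by (destruct n; simpl; ring).
    transitivity (Cconj a * (RtoC (INR (S n)) * (RtoC (INR n) + RtoC be) * e (S n)))%C.
    rewrite RtoC_mult, RtoC_plus. ring. rewrite H. ring. }
  assert (Rx : forall n, INR (S n) * (INR n + be) * x (S n) = - tau * x n + y n / 2 - xs n / 4).
  { intros n. pose proof (f_equal Re (rrec n)) as E. unfold x, y, xs.
    destruct (r (S n)) as [p1 p2]. destruct (r n) as [q1 q2]. destruct (sh r n) as [s1 s2].
    simpl in E |- *. lra. }
  assert (Ry : forall n, INR (S n) * (INR n + be) * y (S n) = - tau * y n - x n / 2 - ys n / 4).
  { intros n. pose proof (f_equal Im (rrec n)) as E. unfold x, y, ys.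
    destruct (r (S n)) as [p1 p2]. destruct (r n) as [q1 q2]. destruct (sh r n) as [s1 s2].
    simpl in E |- *. lra. }
  assert (x0 : x O = gamma).
  { unfold x, r, e. rewrite (ee_0 a be). unfold a. simpl. ring. }
  assert (y0 : y O = - tau).
  { unfold y, r, e. rewrite (ee_0 a be). unfold a. simpl. ring. }
  assert (base : y O = 2 * x 1%nat).
  { pose proof (Rx O) as R0. unfold xs in R0. simpl sh in R0. simpl Re in R0. simpl INR in R0.
    rewrite x0, y0 in R0. rewrite y0. unfold be in R0.
    apply Rmult_eq_reg_l with be; [|lra]. unfold be. lra. }
  pose proof (xy_ind x y xs ys tau be Hb (fun n => eq_refl) (fun n => eq_refl)
     ltac:(unfold xs; simpl; reflexivity) ltac:(unfold ys; simpl; reflexivity) Rx Ry base) as XY.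
  set (g := fun n => RtoC (2 * x n)).
  assert (gE : forall n, g n = (Cconj a * e n + a * Cconj (e n))%C).
  { intros n. unfold g, x. rewrite re2_conj. unfold r. rewrite Cmult_conj, Cconj_conj. ring. }
  pose proof (fb_ext _ g _ _ (fun n => eq_sym (gE n)) (fb_plus _ _ _ _ _ _ (fb_scal (Cconj a) _ _ _ He) (fb_scal a _ _ _ (fb_conj _ _ _ He)))) as Hgfb.
  assert (greal : forall n, Im (g n) = 0) by (intros; reflexivity).
  assert (shg : forall n, sh g n = RtoC (2 * xs n)).
  { intros [|n]; unfold xs; simpl. apply injective_projections; simpl; ring. reflexivity. }
  assert (grec : forall n, (RtoC (INR (S n)) * (RtoC (INR n) + RtoC (2 * gamma)) * g (S n))%C = (- RtoC tau * g n - / 4 * sh g n)%C).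
  { intros n. rewrite shg, inv4. unfold g. pose proof (Rx n) as R. pose proof (XY n) as Y. unfold be in R.
    rewrite S_INR in *. apply injective_projections; simpl; lra. }
  assert (dcg : forall n, dc g n = RtoC (y n)).
  { intros n. unfold dc, g. rewrite <- RtoC_mult. f_equal. rewrite XY. ring. }
  destruct (ray g _ _ gamma tau z Hgfb greal grec Hg Hz) as [R1 R2].
  set (psi := (Cconj a * PS e z)%C). set (phi := (a * Cconj (PS e (Cconj z)))%C).
  assert (Pg : PS g z = (psi + phi)%C).
  { apply HS_unique. pose proof (HSt_plus _ _ _ _ (HSt_scal (Cconj a) _ _ (HS_PS _ _ _ z He))
        (HSt_scal a _ _ (HSt_conj _ _ (HS_PS _ _ _ (Cconj z) He)))) as H.
    revert H. apply HSt_ext; auto. intros n. rewrite gE. rewrite Cmult_conj, Cpow_conj, Cconj_conj. ring. }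
  assert (Pdg : PS (dc g) z = (lam * (psi - phi))%C).
  { apply HS_unique. pose proof (HSt_scal lam _ _ (HSt_plus _ _ _ _ (HSt_scal (Cconj a) _ _ (HS_PS _ _ _ z He))
        (HSt_scal (- a)%C _ _ (HSt_conj _ _ (HS_PS _ _ _ (Cconj z) He))))) as H.
    revert H. apply HSt_ext. intros n. rewrite dcg. unfold y. rewrite im_lam. unfold r.
    rewrite !Cmult_conj, !Cpow_conj, !Cconj_conj. ring. unfold psi, phi. ring. }
  rewrite Pg, Pdg, key_id in R1, R2.
  assert (Strict : Cmod phi ^ 2 < Cmod psi ^ 2).
  { destruct (Rle_dec (Cmod psi ^ 2) (Cmod phi ^ 2)) as [Hle|Hlt]; [|lra].
    exfalso. assert (- (Cmod psi ^ 2 - Cmod phi ^ 2) / 2 = 0) by lra.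
    destruct (R2 H) as [G0 G1]. apply Hnz. split.
    - unfold g in G0. injection G0. rewrite x0. lra.
    - rewrite dcg in G1. injection G1. rewrite y0. lra. }
  assert (Ha : 0 < Cmod a).
  { destruct (Rle_lt_or_eq_dec 0 (Cmod a) (Cmod_ge_0 a)) as [|E]; auto.
    exfalso. symmetry in E. apply Cmod_eq_0 in E. apply Hnz. unfold a in E.
    pose proof (f_equal fst E). pose proof (f_equal snd E). simpl in *. split; lra. }
  unfold psi, phi in Strict. rewrite !Cmod_mult, Cmod_conj, Cmod_conj in Strict.
  pose proof (Cmod_ge_0 (PS e z)). pose proof (Cmod_ge_0 (PS e (Cconj z))).
  split.
  - intros E0. fold e in E0. rewrite E0, Cmod_0 in Strict. nra.
  - fold e. destruct (Rle_dec (Cmod (PS e (Cconj z))) (Cmod (PS e z))) as [|Hc]; auto. exfalso.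
    assert (Cmod a * Cmod (PS e z) < Cmod a * Cmod (PS e (Cconj z))) by (apply Rmult_lt_compat_l; lra).
    assert (0 <= Cmod a * Cmod (PS e z)) by (apply Rmult_le_pos; lra).
    nra.
Qed.

Lemma main_case_wrap gamma tau (F : C -> C) : -1/2 < gamma -> ~ (gamma = 0 /\ tau = 0) ->
  (forall z, F z = PS (ee (RtoC gamma + Ci * RtoC tau)%C (2 * gamma + 1)) z) ->
  (forall z, 0 < Im z -> F z <> RtoC 0) /\ (forall z, 0 < Im z -> Cmod (F (Cconj z)) <= Cmod (F z)).
Proof.
  intros Hg Hnz HF. split; intros z Hz; rewrite !HF; apply (main_case gamma tau Hg Hnz z Hz).
Qed.

Theorem corollary2p6 (gamma tau : R) :
  (-1/2 < gamma)%R ->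
  hermite_biehler
    (fun z : C =>
       (hyp1F1 (RtoC gamma + Ci * RtoC tau) (RtoC (2 * gamma + 1)) (Ci * z)
        * cexp (- (Ci * z) / RtoC 2))%C).
Proof.
  intros Hg.
  set (a := (RtoC gamma + Ci * RtoC tau)%C).
  set (be := 2 * gamma + 1).
  assert (Hb : 0 < be) by (unfold be; lra).
  set (F := fun z : C => (hyp1F1 a (RtoC be) (Ci * z) * cexp (- (Ci * z) / RtoC 2))%C).
  change (hermite_biehler F).
  assert (HF : forall z, F z = PS (ee a be) z) by (intros z; unfold F; exact (bridge a be z Hb)).
  assert (Ent : entire F).
  { intros z. exists (PS (dc (ee a be)) z).
    pose proof (PS_is_derive (ee a be) _ _ z (fb_ee a be Hb)) as D.
    exact (@is_derive_ext C_AbsRing C_NormedModule (PS (ee a be)) F z _ (fun t => eq_sym (HF t)) D). }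
  split; auto.
  destruct (Req_dec gamma 0) as [G0|G0]; [destruct (Req_dec tau 0) as [T0|T0]|].
  3: apply (main_case_wrap gamma tau F); auto; intros [HH _]; apply G0; exact HH.
  2: apply (main_case_wrap gamma tau F); auto; intros [_ HH]; apply T0; exact HH.
  assert (Ea : a = RtoC 0) by (unfold a; rewrite G0, T0; apply injective_projections; simpl; ring).
  assert (HF0 : forall z, F z = cexp (- (Ci * z) / RtoC 2)).
  { intros z. unfold F. rewrite bridge_hyp by auto. rewrite PS_scale.
    rewrite (PS_tl _ 1 (1 + Cmod a / be)) by (apply fb_mt; auto).
    assert (T : PS (tl (fun n => mm a (RtoC be) n * Ci ^ n)%C) z = RtoC 0).
    { apply HS_unique. generalize HSt_zero. apply HSt_ext; auto. intros n. unfold tl, mm.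
      rewrite Ea, poch0. unfold Cdiv. ring. }
    rewrite T. assert (M0 : mm a (RtoC be) O = RtoC 1).
    { unfold mm. simpl poch. replace (INR (fact 0)) with 1 by reflexivity.
      apply injective_projections; simpl; field. }
    rewrite M0. simpl (Ci ^ 0)%C. ring. }
  split.
  - intros z Hz E0. rewrite HF0, arg_half in E0.
    apply (f_equal Cmod) in E0. rewrite Cmod_cexp, Cmod_0 in E0. pose proof (exp_pos (Im z / 2)). lra.
  - intros z Hz. rewrite !HF0, !arg_half, !Cmod_cexp. apply exp_le_exp'. rewrite im_conj. lra.
Qed.
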